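(* Let $\gamma_a,\gamma_s>0$, $\sigma_B>0$, $q>0$, let $\beta_s$ be the piecewise linear coalbedo described in the context, and fix $\lambda\ge0$. For $\varepsilon_a\in(0,2)$ consider the system \[ \gamma_a T_a'=-\lambda(T_a-T_s)+\varepsilon_a\sigma_B|T_s|^3T_s-2\varepsilon_a\sigma_B|T_a|^3T_a,\qquad \gamma_s T_s'=-\lambda(T_s-T_a)-\sigma_B|T_s|^3T_s+\varepsilon_a\sigma_B|T_a|^3T_a+q\beta_s(T_s). \] Let $\varepsilon_a^*\in(0,2)$ and let $(T_a^{eq,\varepsilon_a^*},T_s^{eq,\varepsilon_a^*})$ be a warm [respectively cold] equilibrium point of the system with $\varepsilon_a=\varepsilon_a^*$, in the sense that $T_s^{eq,\varepsilon_a^*}\notin[T_{s,-},T_{s,+}]$. Then for $\varepsilon_a$ close to $\varepsilon_a^*$ there exists a unique warm [respectively cold] equilibrium point $(T_a^{eq,\varepsilon_a},T_s^{eq,\varepsilon_a})$ of the system with parameter $\varepsilon_a$; this equilibrium is asymptotically exponentially stable; the maps $\varepsilon_a\mapsto T_s^{eq,\varepsilon_a}$ and $\varepsilon_a\mapsto T_a^{eq,\varepsilon_a}$ are locally analytic; locally, $\varepsilon_a\mapsto T_s^{eq,\varepsilon_a}$ is increasing; and, if $\varepsilon_a^*\in(1,2)$, locally $\varepsilon_a\mapsto T_a^{eq,\varepsilon_a}$ is increasing.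
   Context: The coalbedo is $\beta_s(T)=\beta_{s,-}$ for $T\le T_{s,-}$, $\beta_s(T)=\beta_{s,-}+(\beta_{s,+}-\beta_{s,-})\frac{T-T_{s,-}}{T_{s,+}-T_{s,-}}$ for $T\in[T_{s,-},T_{s,+}]$, and $\beta_s(T)=\beta_{s,+}$ for $T\ge T_{s,+}$, where $T_{s,+}>T_{s,-}>0$ and $\beta_{s,+}>\beta_{s,-}>0$. An equilibrium point is a point $(T_a,T_s)$ with nonnegative components where both right-hand sides vanish; it is warm if $T_s>T_{s,+}$ and cold if $T_s<T_{s,-}$. *)

(* Defs.v *)
From Stdlib Require Import Reals Lra.
From Coquelicot Require Import Coquelicot.
Open Scope R_scope.

Definition coalbedo (Tsm Tsp bm bp T : R) : R :=
  if Rle_dec T Tsm then bm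
  else if Rle_dec Tsp T then bp
  else bm + (bp - bm) * (T - Tsm) / (Tsp - Tsm).

Definition p4 (x : R) : R := Rabs x ^ 3 * x.

(* right-hand side of the T_a equation (without the factor 1/gamma_a) *)
Definition Fa (lam sig eps Ta Ts : R) : R :=
  - lam * (Ta - Ts) + eps * sig * p4 Ts - 2 * eps * sig * p4 Ta.

(* right-hand side of the T_s equation (without the factor 1/gamma_s) *)
Definition Fs (lam sig q : R) (beta : R -> R) (eps Ta Ts : R) : R :=
  - lam * (Ts - Ta) - sig * p4 Ts + eps * sig * p4 Ta + q * beta Ts.

Definition is_equilibrium (lam sig q : R) (beta : R -> R) (eps Ta Ts : R) : Prop :=
  0 <= Ta /\ 0 <= Ts /\ Fa lam sig eps Ta Ts = 0 /\ Fs lam sig q beta eps Ta Ts = 0.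

Definition regime (w : bool) (Tsm Tsp Ts : R) : Prop :=
  if w then Tsp < Ts else Ts < Tsm.

Definition is_solution (ga gs lam sig q : R) (beta : R -> R) (eps T : R)
  (xa xs : R -> R) : Prop :=
  (forall t, 0 <= t < T -> continuous xa t /\ continuous xs t) /\
  (forall t, 0 < t < T ->
     is_derive xa t (/ ga * Fa lam sig eps (xa t) (xs t)) /\
     is_derive xs t (/ gs * Fs lam sig q beta eps (xa t) (xs t))).

Definition dist2 (a s a' s' : R) : R := sqrt ((a - a') ^ 2 + (s - s') ^ 2).

Definition exp_stable (ga gs lam sig q : R) (beta : R -> R) (eps Ta Ts : R) : Prop :=
  exists d C mu, 0 < d /\ 0 < C /\ 0 < mu /\
    forall (T : R) (xa xs : R -> R), 0 < T ->
      is_solution ga gs lam sig q beta eps T xa xs ->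
      dist2 (xa 0) (xs 0) Ta Ts < d ->
      forall t, 0 <= t < T ->
        dist2 (xa t) (xs t) Ta Ts <= C * exp (- mu * t) * dist2 (xa 0) (xs 0) Ta Ts.

Definition analytic_at (f : R -> R) (x : R) : Prop :=
  exists (a : nat -> R) (r : R), 0 < r /\
    forall y, Rabs (y - x) < r -> is_pseries a (y - x) (f y).

(* Main.v *)
Require Import Defs.
From Stdlib Require Import Reals Lra Lia Psatz ClassicalEpsilon.
From Coquelicot Require Import Coquelicot.
Open Scope R_scope.


Definition zs (u : nat -> R) (n : nat) : R := match n with O => 0 | _ => u n end.
Definition splus (u v : nat -> R) (n : nat) : R := u n + v n.
Definition sscal (c : R) (u : nat -> R) (n : nat) : R := c * u n.
Definition sh (u : nat -> R) (n : nat) : R := match n with O => 0 | S m => u m end.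
Definition d0 (c : R) (n : nat) : R := match n with O => c | _ => 0 end.
Definition cv (u v : nat -> R) : nat -> R := PS_mult (zs u) (zs v).
Definition nrm (r : R) (N : nat) (u : nat -> R) : R :=
  sum_f_R0 (fun n => Rabs (u n) * r ^ n) N.

Lemma splus_PS u v n : splus u v n = PS_plus u v n.
Proof. reflexivity. Qed.
Lemma sscal_PS c u n : sscal c u n = PS_scal c u n.
Proof. reflexivity. Qed.
Lemma sh_PS u n : sh u n = PS_incr_1 u n.
Proof. destruct n; reflexivity. Qed.

Lemma sum_f_le (f g : nat -> R) N : (forall n, (n <= N)%nat -> f n <= g n) ->
  sum_f_R0 f N <= sum_f_R0 g N.
Proof.
  induction N; intros H; simpl. apply H; lia.
  apply Rplus_le_compat. apply IHN; intros; apply H; lia. apply H; lia.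
Qed.

Lemma sum_f_nonneg (f : nat -> R) N : (forall n, (n <= N)%nat -> 0 <= f n) ->
  0 <= sum_f_R0 f N.
Proof.
  induction N; intros H; simpl. apply H; lia.
  apply Rplus_le_le_0_compat. apply IHN; intros; apply H; lia. apply H; lia.
Qed.

Lemma nrm_nonneg r N u : 0 <= r -> 0 <= nrm r N u.
Proof.
  intros Hr; unfold nrm; apply sum_f_nonneg; intros.
  apply Rmult_le_pos; [apply Rabs_pos | apply pow_le; auto].
Qed.

Lemma nrm_S r N u : nrm r (S N) u = nrm r N u + Rabs (u (S N)) * r ^ (S N).
Proof. reflexivity. Qed.

Lemma nrm_mono r N M u : 0 <= r -> (N <= M)%nat -> nrm r N u <= nrm r M u.
Proof.
  intros Hr H; induction H. lra.
  rewrite nrm_S. assert (0 <= Rabs (u (S m)) * r ^ S m).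
  apply Rmult_le_pos; [apply Rabs_pos | apply pow_le; auto]. lra.
Qed.

Lemma nrm_plus r N u v : 0 <= r -> nrm r N (splus u v) <= nrm r N u + nrm r N v.
Proof.
  intros Hr; unfold nrm. rewrite <- sum_plus. apply sum_f_le; intros n _.
  unfold splus. rewrite <- Rmult_plus_distr_r. apply Rmult_le_compat_r.
  apply pow_le; auto. apply Rabs_triang.
Qed.

Lemma nrm_scal r N c u : nrm r N (sscal c u) = Rabs c * nrm r N u.
Proof.
  unfold nrm, sscal. rewrite scal_sum. 
  induction N; simpl. rewrite Rabs_mult; ring.
  rewrite IHN, Rabs_mult; ring.
Qed.

Lemma nrm_zs r N u : 0 <= r -> nrm r N (zs u) <= nrm r N u.
Proof.
  intros Hr; unfold nrm. apply sum_f_le; intros n _. destruct n; simpl.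
  rewrite Rabs_R0; rewrite Rmult_0_l. apply Rmult_le_pos; [apply Rabs_pos|lra].
  lra.
Qed.

Lemma nrm_sh_S r N u : nrm r (S N) (sh u) = r * nrm r N u.
Proof.
  induction N. unfold nrm; simpl. rewrite Rabs_R0; ring.
  rewrite nrm_S, IHN, nrm_S. simpl sh. simpl pow. ring.
Qed.

Lemma nrm_sh r N u : 0 <= r -> nrm r N (sh u) <= r * nrm r N u.
Proof.
  intros Hr. destruct N. unfold nrm; simpl. rewrite Rabs_R0.
  assert (0 <= r * (Rabs (u 0%nat) * 1)).
  apply Rmult_le_pos; auto. apply Rmult_le_pos; [apply Rabs_pos|lra]. lra.
  rewrite nrm_sh_S. apply Rmult_le_compat_l; auto. apply nrm_mono; auto.
Qed.

Lemma nrm_d0 r N c : nrm r N (d0 c) = Rabs c.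
Proof.
  induction N. unfold nrm; simpl; ring. rewrite nrm_S, IHN. simpl. rewrite Rabs_R0; ring.
Qed.

Lemma sum_f_scal_r (f : nat -> R) c N : sum_f_R0 f N * c = sum_f_R0 (fun k => f k * c) N.
Proof. induction N; simpl. ring. rewrite <- IHN; ring. Qed.

Lemma mult_term_bound r a b n : 0 <= r ->
  Rabs (PS_mult a b n) * r ^ n <=
  sum_f_R0 (fun k => (Rabs (a k) * r ^ k) * (Rabs (b (n - k)%nat) * r ^ (n - k))) n.
Proof.
  intros Hr. unfold PS_mult.
  eapply Rle_trans. apply Rmult_le_compat_r. apply pow_le; auto. apply sum_f_R0_triangle.
  rewrite sum_f_scal_r. apply sum_f_le; intros k Hk.
  replace (r ^ n) with (r ^ k * r ^ (n - k)). rewrite Rabs_mult. right; ring.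
  rewrite <- pow_add. f_equal. lia.
Qed.

Lemma cauchy_le (A B : nat -> R) N : (forall n, 0 <= A n) -> (forall n, 0 <= B n) ->
  sum_f_R0 (fun k => sum_f_R0 (fun p => A p * B (k - p)%nat) k) N <=
  sum_f_R0 A N * sum_f_R0 B N.
Proof.
  intros HA HB. destruct N. simpl. lra.
  rewrite cauchy_finite by lia.
  assert (0 <= sum_f_R0 (fun k : nat =>
        sum_f_R0 (fun l : nat => A (S (l + k)) * B (S N - l)%nat) (Init.Nat.pred (S N - k)))
     (Init.Nat.pred (S N))).
  apply sum_f_nonneg; intros; apply sum_f_nonneg; intros. apply Rmult_le_pos; auto.
  lra.
Qed.

Lemma nrm_mult r N a b : 0 <= r -> nrm r N (PS_mult a b) <= nrm r N a * nrm r N b.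
Proof.
  intros Hr. unfold nrm at 1.
  eapply Rle_trans. apply sum_f_le. intros n _. apply mult_term_bound; auto.
  unfold nrm. apply (cauchy_le (fun k => Rabs (a k) * r ^ k) (fun k => Rabs (b k) * r ^ k));
  intros; apply Rmult_le_pos; try apply Rabs_pos; apply pow_le; auto.
Qed.

Lemma nrm_cv r N u v : 0 <= r -> nrm r N (cv u v) <= nrm r N u * nrm r N v.
Proof.
  intros Hr. unfold cv. eapply Rle_trans. apply nrm_mult; auto.
  apply Rmult_le_compat; try apply nrm_nonneg; auto; apply nrm_zs; auto.
Qed.

Definition AB (n : nat) (u v : nat -> R) : Prop := forall k, (k < n)%nat -> u k = v k.

Lemma AB_mono n m u v : (m <= n)%nat -> AB n u v -> AB m u v.
Proof. intros H1 H2 k Hk. apply H2; lia. Qed.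
Lemma AB_refl n u : AB n u u.
Proof. intros k _; reflexivity. Qed.
Lemma AB_trans n u v w : AB n u v -> AB n v w -> AB n u w.
Proof. intros H1 H2 k Hk. rewrite H1, H2; auto. Qed.
Lemma AB_plus n u v u' v' : AB n u u' -> AB n v v' -> AB n (splus u v) (splus u' v').
Proof. intros H1 H2 k Hk. unfold splus. rewrite H1, H2; auto. Qed.
Lemma AB_scal n c u u' : AB n u u' -> AB n (sscal c u) (sscal c u').
Proof. intros H1 k Hk. unfold sscal. rewrite H1; auto. Qed.
Lemma AB_sh n u u' : AB n u u' -> AB (S n) (sh u) (sh u').
Proof. intros H1 k Hk. destruct k; simpl; auto. apply H1; lia. Qed.
Lemma AB_cv n u v u' v' : AB n u u' -> AB n v v' -> AB (S n) (cv u v) (cv u' v').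
Proof.
  intros H1 H2 k Hk. unfold cv, PS_mult. apply sum_eq. intros j Hj.
  destruct j as [|j]. simpl. ring.
  destruct (Nat.eq_dec (S j) k) as [E|E].
  subst k. rewrite Nat.sub_diag. simpl. ring.
  remember (k - S j)%nat as m. destruct m as [|m]. lia.
  simpl. rewrite H1, H2; auto; lia.
Qed.

Lemma CV_ge r u B : 0 < r -> (forall N, nrm r N u <= B) -> Rbar_le r (CV_radius u).
Proof.
  intros Hr HB. destruct (CV_radius_bounded u) as [Hub _].
  apply Hub. exists B. intros n. eapply Rle_trans; [|apply (HB n)].
  rewrite Rabs_mult, (Rabs_pos_eq (r ^ n)) by (apply pow_le; lra).
  destruct n. unfold nrm; simpl; lra.
  rewrite nrm_S. assert (0 <= nrm r n u) by (apply nrm_nonneg; lra). lra.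
Qed.

Lemma CV_lt r u B x : 0 < r -> (forall N, nrm r N u <= B) -> Rabs x < r ->
  Rbar_lt (Rabs x) (CV_radius u).
Proof.
  intros Hr HB Hx. generalize (CV_ge r u B Hr HB). destruct (CV_radius u); simpl; auto; lra.
Qed.

Lemma ev_plus u v x a b : is_pseries u x a -> is_pseries v x b -> is_pseries (splus u v) x (a + b).
Proof.
  intros H1 H2. eapply is_pseries_ext. intros n. symmetry; apply splus_PS.
  apply (is_pseries_plus u v x a b H1 H2).
Qed.
Lemma ev_scal c u x a : is_pseries u x a -> is_pseries (sscal c u) x (c * a).
Proof.
  intros H1. eapply is_pseries_ext. intros n. symmetry; apply sscal_PS.
  apply (is_pseries_scal c u x a). apply Rmult_comm. auto.
Qed.
Lemma ev_sh u x a : is_pseries u x a -> is_pseries (sh u) x (x * a).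
Proof.
  intros H1. eapply is_pseries_ext. intros n. symmetry; apply sh_PS.
  apply (is_pseries_incr_1 u x a H1).
Qed.
Lemma ev_d0 c x : is_pseries (d0 c) x c.
Proof.
  unfold is_pseries, is_series. eapply filterlim_ext.
  2: apply filterlim_const.
  intros n. simpl. induction n. rewrite sum_O. simpl. rewrite scal_one. reflexivity.
  rewrite sum_Sn, <- IHn. simpl. unfold scal, plus; simpl; unfold mult, plus; simpl. ring.
Qed.
Lemma ev_zs u x a : is_pseries u x a -> is_pseries (zs u) x (a - u 0%nat).
Proof.
  intros H1. eapply is_pseries_ext.
  2: apply (ev_plus u (d0 (- u 0%nat)) x a (- u 0%nat) H1 (ev_d0 _ _)).
  intros n; destruct n; unfold splus, d0, zs; simpl; ring.
Qed.
Lemma ev_cv u v x a b : is_pseries u x a -> is_pseries v x b ->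
  Rbar_lt (Rabs x) (CV_radius (zs u)) -> Rbar_lt (Rabs x) (CV_radius (zs v)) ->
  is_pseries (cv u v) x ((a - u 0%nat) * (b - v 0%nat)).
Proof.
  intros H1 H2 H3 H4. unfold cv. apply is_pseries_mult; auto; apply ev_zs; auto.
Qed.

Lemma ev_bound u x a r B : is_pseries u x a -> Rabs x <= r -> (forall N, nrm r N u <= B) -> Rabs a <= B.
Proof.
  intros H Hx HB. unfold is_pseries, is_series in H.
  assert (L: is_lim_seq (sum_n (fun k => scal (pow_n x k) (u k))) a) by exact H.
  apply is_lim_seq_abs in L.
  assert (L2 : is_lim_seq (fun _ : nat => B) B) by apply is_lim_seq_const.
  assert (Hle : Rbar_le (Rbar_abs a) B). 2: exact Hle.
  refine (is_lim_seq_le _ _ _ _ _ L L2). intros N. simpl.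
  rewrite sum_n_Reals. eapply Rle_trans. apply sum_f_R0_triangle. eapply Rle_trans. 2: apply (HB N).
  unfold nrm. apply sum_f_le. intros n _. unfold scal; simpl; unfold mult; simpl.
  rewrite pow_n_pow, Rabs_mult, <- RPow_abs, Rmult_comm. apply Rmult_le_compat_l. apply Rabs_pos.
  apply pow_incr. split; auto. apply Rabs_pos.
Qed.


Definition Hseq (A : R) (u : nat -> R) : nat -> R :=
  splus (sscal (6*A^2) (cv u u)) (splus (sscal (4*A) (cv u (cv u u))) (cv u (cv u (cv u u)))).
Definition Hval (A x : R) : R := 6*A^2*(x*x) + (4*A*(x*(x*x)) + x*(x*(x*x))).

Lemma cv0 u v : cv u v 0%nat = 0.
Proof. unfold cv, PS_mult; simpl; ring. Qed.

Lemma AB_H n A u u' : AB n u u' -> AB (S n) (Hseq A u) (Hseq A u').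
Proof.
  intros H. unfold Hseq.
  assert (H2 := AB_cv _ _ _ _ _ H H).
  assert (H3 := AB_cv _ _ _ _ _ H (AB_mono _ _ _ _ (le_S _ _ (le_n _)) H2)).
  assert (H4 := AB_cv _ _ _ _ _ H (AB_mono _ _ _ _ (le_S _ _ (le_n _)) H3)).
  apply AB_plus. apply AB_scal; auto. apply AB_plus; auto. apply AB_scal; auto.
Qed.

Lemma nrm_H r N A u t : 0 <= r -> nrm r N u <= t -> t <= 1 ->
  nrm r N (Hseq A u) <= (6*A^2 + 4*Rabs A + 1) * t^2.
Proof.
  intros Hr Hu Ht. unfold Hseq.
  assert (T0 : 0 <= nrm r N u) by (apply nrm_nonneg; auto).
  assert (C2 : nrm r N (cv u u) <= t^2).
  { eapply Rle_trans. apply nrm_cv; auto. simpl. rewrite Rmult_1_r. apply Rmult_le_compat; auto. }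
  assert (T2 : 0 <= nrm r N (cv u u)) by (apply nrm_nonneg; auto).
  assert (C3 : nrm r N (cv u (cv u u)) <= t^2).
  { eapply Rle_trans. apply nrm_cv; auto. simpl. rewrite Rmult_1_r.
    assert (0 <= t) by lra. nra. }
  assert (T3 : 0 <= nrm r N (cv u (cv u u))) by (apply nrm_nonneg; auto).
  assert (C4 : nrm r N (cv u (cv u (cv u u))) <= t^2).
  { eapply Rle_trans. apply nrm_cv; auto. simpl. rewrite Rmult_1_r.
    assert (0 <= t) by lra. simpl in C3. rewrite Rmult_1_r in C3. nra. }
  eapply Rle_trans. apply nrm_plus; auto. rewrite nrm_scal.
  eapply Rle_trans. apply Rplus_le_compat_l. apply nrm_plus; auto. rewrite nrm_scal.
  rewrite !Rabs_mult. rewrite (Rabs_right 6), (Rabs_right 4) by lra.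
  rewrite <- RPow_abs. replace (Rabs A ^2) with (A^2). 2:{ rewrite <- !Rsqr_pow2. apply Rsqr_abs. }
  assert (0 <= Rabs A) by apply Rabs_pos. assert (0 <= A^2) by apply pow2_ge_0.
  assert (0 <= t^2) by apply pow2_ge_0. nra.
Qed.

Lemma ev_H A u h x : is_pseries u h x -> u 0%nat = 0 ->
  Rbar_lt (Rabs h) (CV_radius (zs u)) ->
  Rbar_lt (Rabs h) (CV_radius (zs (cv u u))) ->
  Rbar_lt (Rabs h) (CV_radius (zs (cv u (cv u u)))) ->
  is_pseries (Hseq A u) h (Hval A x).
Proof.
  intros H0 Hu0 C1 C2 C3.
  assert (E2 := ev_cv _ _ _ _ _ H0 H0 C1 C1). rewrite Hu0 in E2.
  assert (E3 := ev_cv _ _ _ _ _ H0 E2 C1 C2). rewrite Hu0, cv0 in E3.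
  assert (E4 := ev_cv _ _ _ _ _ H0 E3 C1 C3). rewrite Hu0, cv0 in E4.
  unfold Hseq, Hval. apply ev_plus. apply ev_scal. replace (x*x) with ((x-0)*(x-0)) by ring; auto.
  apply ev_plus. apply ev_scal. replace (x*(x*x)) with ((x-0)*((x-0)*(x-0)-0)) by ring; auto.
  replace (x*(x*(x*x))) with ((x-0)*((x-0)*((x-0)*(x-0)-0)-0)) by ring; auto.
Qed.

Definition a11 lam sig e A := lam + 8*e*sig*A^3.
Definition a12 lam sig e S := lam + 4*e*sig*S^3.
Definition a21 lam sig e A := lam + 4*e*sig*A^3.
Definition a22 lam sig S := lam + 4*sig*S^3.
Definition Dt lam sig e A S :=
  a11 lam sig e A * a22 lam sig S - a12 lam sig e S * a21 lam sig e A.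

Definition Q1seq sig e A S (a s : nat -> R) : nat -> R :=
  splus (sscal (e*sig) (Hseq S s)) (splus (sscal (-2*e*sig) (Hseq A a))
   (sh (splus (d0 (sig*S^4 - 2*sig*A^4)) (splus (sscal (4*sig*S^3) s)
     (splus (sscal sig (Hseq S s)) (splus (sscal (-8*sig*A^3) a) (sscal (-2*sig) (Hseq A a)))))))).
Definition Q2seq sig e A S (a s : nat -> R) : nat -> R :=
  splus (sscal (-sig) (Hseq S s)) (splus (sscal (e*sig) (Hseq A a))
   (sh (splus (d0 (sig*A^4)) (splus (sscal (4*sig*A^3) a) (sscal sig (Hseq A a)))))).
Definition Q1v sig e A S h x y : R :=
  e*sig*Hval S y + (-2*e*sig*Hval A x +
   h*((sig*S^4 - 2*sig*A^4) + (4*sig*S^3*y + (sig*Hval S y + (-8*sig*A^3*x + -2*sig*Hval A x))))).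
Definition Q2v sig e A S h x y : R :=
  -sig*Hval S y + (e*sig*Hval A x + h*(sig*A^4 + (4*sig*A^3*x + sig*Hval A x))).

Definition Phia lam sig e A S a s :=
  sscal (/ Dt lam sig e A S) (splus (sscal (a22 lam sig S) (Q1seq sig e A S a s))
                                    (sscal (a12 lam sig e S) (Q2seq sig e A S a s))).
Definition Phis lam sig e A S a s :=
  sscal (/ Dt lam sig e A S) (splus (sscal (a21 lam sig e A) (Q1seq sig e A S a s))
                                    (sscal (a11 lam sig e A) (Q2seq sig e A S a s))).

Lemma AB_Q1 n sig e A S0 a s a' s' : AB n a a' -> AB n s s' ->
  AB (S n) (Q1seq sig e A S0 a s) (Q1seq sig e A S0 a' s').
Proof.
  intros Ha Hs. unfold Q1seq.
  assert (HA := AB_H _ A _ _ Ha). assert (HS := AB_H _ S0 _ _ Hs).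
  assert (HA' := AB_mono _ _ _ _ (le_S _ _ (le_n _)) HA).
  assert (HS' := AB_mono _ _ _ _ (le_S _ _ (le_n _)) HS).
  repeat apply AB_plus; try apply AB_scal; auto.
  apply AB_sh. repeat apply AB_plus; try apply AB_scal; auto. apply AB_refl.
Qed.

Lemma AB_Q2 n sig e A S0 a s a' s' : AB n a a' -> AB n s s' ->
  AB (S n) (Q2seq sig e A S0 a s) (Q2seq sig e A S0 a' s').
Proof.
  intros Ha Hs. unfold Q2seq.
  assert (HA := AB_H _ A _ _ Ha). assert (HS := AB_H _ S0 _ _ Hs).
  assert (HA' := AB_mono _ _ _ _ (le_S _ _ (le_n _)) HA).
  repeat apply AB_plus; try apply AB_scal; auto.
  apply AB_sh. repeat apply AB_plus; try apply AB_scal; auto. apply AB_refl.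
Qed.

Lemma AB_Phia n lam sig e A S0 a s a' s' : AB n a a' -> AB n s s' ->
  AB (S n) (Phia lam sig e A S0 a s) (Phia lam sig e A S0 a' s').
Proof.
  intros Ha Hs. unfold Phia. apply AB_scal. apply AB_plus; apply AB_scal.
  apply AB_Q1; auto. apply AB_Q2; auto.
Qed.
Lemma AB_Phis n lam sig e A S0 a s a' s' : AB n a a' -> AB n s s' ->
  AB (S n) (Phis lam sig e A S0 a s) (Phis lam sig e A S0 a' s').
Proof.
  intros Ha Hs. unfold Phis. apply AB_scal. apply AB_plus; apply AB_scal.
  apply AB_Q1; auto. apply AB_Q2; auto.
Qed.

Lemma nrm_plus_le r N u v p q : 0 <= r -> nrm r N u <= p -> nrm r N v <= q -> nrm r N (splus u v) <= p + q.
Proof. intros. eapply Rle_trans. apply nrm_plus; auto. lra. Qed.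
Lemma nrm_scal_le r N c u p : nrm r N u <= p -> nrm r N (sscal c u) <= Rabs c * p.
Proof. intros. rewrite nrm_scal. apply Rmult_le_compat_l; auto. apply Rabs_pos. Qed.
Lemma nrm_sh_le r N u p : 0 <= r -> nrm r N u <= p -> nrm r N (sh u) <= r * p.
Proof. intros. eapply Rle_trans. apply nrm_sh; auto. apply Rmult_le_compat_l; auto. Qed.
Lemma nrm_d0_le r N c : nrm r N (d0 c) <= Rabs c.
Proof. rewrite nrm_d0; lra. Qed.

Definition HA A := 6*A^2 + 4*Rabs A + 1.

Ltac nrmtac := repeat (first [ apply nrm_plus_le; auto | apply nrm_scal_le | apply nrm_sh_le; auto
   | apply nrm_d0_le | apply nrm_H; auto ]).

Definition KQ sig e A S0 :=
  Rabs (e*sig) * HA S0 + (Rabs (-2*e*sig) * HA A + (Rabs (sig*S0^4 - 2*sig*A^4) + (Rabs (4*sig*S0^3) +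
  (Rabs sig * HA S0 + (Rabs (-8*sig*A^3) + Rabs (-2*sig) * HA A))))) +
  (Rabs (-sig) * HA S0 + (Rabs (e*sig) * HA A + (Rabs (sig*A^4) + (Rabs (4*sig*A^3) + Rabs sig * HA A)))).

Lemma HA_pos A : 0 <= HA A.
Proof. unfold HA. assert (0 <= Rabs A) by apply Rabs_pos. assert (0 <= A^2) by apply pow2_ge_0. lra. Qed.

Lemma KQ_pos sig e A S0 : 0 <= KQ sig e A S0.
Proof.
  unfold KQ. 
  repeat (apply HA_pos || apply Rabs_pos || apply Rplus_le_le_0_compat || apply Rmult_le_pos).
Qed.

Lemma nrm_Q12 r N sig e A S0 a s t : 0 <= r -> nrm r N a <= t -> nrm r N s <= t -> 0 <= t <= 1 ->
  nrm r N (Q1seq sig e A S0 a s) + nrm r N (Q2seq sig e A S0 a s) <= KQ sig e A S0 * (t^2 + r).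
Proof.
  intros Hr Ha Hs Ht.
  assert (I1 : nrm r N (Q1seq sig e A S0 a s) <=
     Rabs (e*sig) * (HA S0 * t^2) + (Rabs (-2*e*sig) * (HA A * t^2) + r * (Rabs (sig*S0^4 - 2*sig*A^4) + (Rabs (4*sig*S0^3) * t +
       (Rabs sig * (HA S0 * t^2) + (Rabs (-8*sig*A^3) * t + Rabs (-2*sig) * (HA A * t^2))))))).
  { unfold Q1seq. nrmtac; lra. }
  assert (I2 : nrm r N (Q2seq sig e A S0 a s) <=
     Rabs (-sig) * (HA S0 * t^2) + (Rabs (e*sig) * (HA A * t^2) + r * (Rabs (sig*A^4) + (Rabs (4*sig*A^3) * t + Rabs sig * (HA A * t^2))))).
  { unfold Q2seq. nrmtac; lra. }
  assert (T2 : 0 <= t^2 <= 1) by (split; [apply pow2_ge_0| simpl; nra]).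
  destruct T2 as [T2a T2b]. unfold KQ.
  set (b1 := Rabs (e*sig)) in *. set (b2 := Rabs (-2*e*sig)) in *. set (b3 := Rabs (sig*S0^4 - 2*sig*A^4)) in *.
  set (b4 := Rabs (4*sig*S0^3)) in *. set (b5 := Rabs sig) in *. set (b6 := Rabs (-8*sig*A^3)) in *.
  set (b7 := Rabs (-2*sig)) in *. set (b8 := Rabs (-sig)) in *. set (b9 := Rabs (sig*A^4)) in *.
  set (b10 := Rabs (4*sig*A^3)) in *.
  assert (0 <= b1) by apply Rabs_pos. assert (0 <= b2) by apply Rabs_pos. assert (0 <= b3) by apply Rabs_pos.
  assert (0 <= b4) by apply Rabs_pos. assert (0 <= b5) by apply Rabs_pos. assert (0 <= b6) by apply Rabs_pos.
  assert (0 <= b7) by apply Rabs_pos. assert (0 <= b8) by apply Rabs_pos. assert (0 <= b9) by apply Rabs_pos.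
  assert (0 <= b10) by apply Rabs_pos.
  assert (HS := HA_pos S0). assert (HAA := HA_pos A).
  set (HS0 := HA S0) in *. set (HA0 := HA A) in *. set (t2 := t^2) in *.
  assert (R1 : r * (b3 + (b4 * t + (b5 * (HS0 * t2) + (b6 * t + b7 * (HA0 * t2))))) <= r * (b3 + (b4 + (b5 * HS0 + (b6 + b7 * HA0))))).
  { apply Rmult_le_compat_l; [lra|]. assert (b4*t <= b4) by nra. assert (b6*t <= b6) by nra. assert (b5*(HS0*t2) <= b5*HS0) by (apply Rmult_le_compat_l; [lra| rewrite <- (Rmult_1_r HS0) at 2; apply Rmult_le_compat_l; lra]). assert (b7*(HA0*t2) <= b7*HA0) by (apply Rmult_le_compat_l; [lra| rewrite <- (Rmult_1_r HA0) at 2; apply Rmult_le_compat_l; lra]). lra. }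
  assert (R2 : r * (b9 + (b10 * t + b5 * (HA0 * t2))) <= r * (b9 + (b10 + b5 * HA0))).
  { apply Rmult_le_compat_l; [lra|]. assert (b10*t <= b10) by nra. assert (b5*(HA0*t2) <= b5*HA0) by (apply Rmult_le_compat_l; [lra| rewrite <- (Rmult_1_r HA0) at 2; apply Rmult_le_compat_l; lra]). lra. }
  assert (0 <= (b3 + b4 + b5 * HS0 + b6 + b7 * HA0 + b9 + b10 + b5 * HA0) * t2).
  { apply Rmult_le_pos; [|lra]. assert (0 <= b5*HS0) by nra. assert (0 <= b7*HA0) by nra. assert (0 <= b5*HA0) by nra. lra. }
  assert (0 <= (b1 * HS0 + b2 * HA0 + b8 * HS0 + b1 * HA0) * r).
  { apply Rmult_le_pos; [|lra]. assert (0 <= b1*HS0) by nra. assert (0 <= b2*HA0) by nra. assert (0 <= b8*HS0) by nra. assert (0 <= b1*HA0) by nra. lra. }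
  lra.
Qed.

Definition KP lam sig e A S0 :=
  Rabs (/ Dt lam sig e A S0) * (Rabs (a22 lam sig S0) + Rabs (a12 lam sig e S0) + Rabs (a21 lam sig e A) + Rabs (a11 lam sig e A)) * KQ sig e A S0.

Lemma nrm_Phi r N lam sig e A S0 a s t : 0 <= r -> nrm r N a <= t -> nrm r N s <= t -> 0 <= t <= 1 ->
  nrm r N (Phia lam sig e A S0 a s) <= KP lam sig e A S0 * (t^2 + r) /\
  nrm r N (Phis lam sig e A S0 a s) <= KP lam sig e A S0 * (t^2 + r).
Proof.
  intros Hr Ha Hs Ht. assert (Q := nrm_Q12 r N sig e A S0 a s t Hr Ha Hs Ht).
  assert (P1 := nrm_nonneg r N (Q1seq sig e A S0 a s) Hr).
  assert (P2 := nrm_nonneg r N (Q2seq sig e A S0 a s) Hr).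
  unfold Phia, Phis, KP. rewrite !nrm_scal.
  set (d := Rabs (/ Dt lam sig e A S0)). assert (0 <= d) by apply Rabs_pos.
  set (c1 := Rabs (a22 lam sig S0)). set (c2 := Rabs (a12 lam sig e S0)).
  set (c3 := Rabs (a21 lam sig e A)). set (c4 := Rabs (a11 lam sig e A)).
  assert (0 <= c1) by apply Rabs_pos. assert (0 <= c2) by apply Rabs_pos.
  assert (0 <= c3) by apply Rabs_pos. assert (0 <= c4) by apply Rabs_pos.
  set (K := KQ sig e A S0 * (t^2 + r)) in *.
  set (n1 := nrm r N (Q1seq sig e A S0 a s)) in *. set (n2 := nrm r N (Q2seq sig e A S0 a s)) in *.
  replace (d * (c1 + c2 + c3 + c4) * KQ sig e A S0 * (t ^ 2 + r)) with (d * ((c1 + c2 + c3 + c4) * K)) by (unfold K; ring).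
  split; apply Rmult_le_compat_l; auto.
  - eapply Rle_trans. apply nrm_plus; auto. rewrite !nrm_scal. fold n1 n2 c1 c2. nra.
  - eapply Rle_trans. apply nrm_plus; auto. rewrite !nrm_scal. fold n1 n2 c3 c4. nra.
Qed.

Fixpoint It lam sig e A S0 (m : nat) : (nat -> R) * (nat -> R) :=
  match m with
  | O => (fun _ => 0, fun _ => 0)
  | S m' => let p := It lam sig e A S0 m' in
            (Phia lam sig e A S0 (fst p) (snd p), Phis lam sig e A S0 (fst p) (snd p))
  end.

Lemma It_bound lam sig e A S0 r d : 0 <= r -> 0 <= d <= 1 -> KP lam sig e A S0 * (d^2 + r) <= d ->
  forall m N, nrm r N (fst (It lam sig e A S0 m)) <= d /\ nrm r N (snd (It lam sig e A S0 m)) <= d.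
Proof.
  intros Hr Hd HK m. induction m; intros N; simpl.
  - assert (Z : nrm r N (fun _ => 0) = 0).
    { unfold nrm. induction N. simpl; rewrite Rabs_R0; ring. rewrite tech5, IHN, Rabs_R0; ring. }
    rewrite Z. lra.
  - destruct (IHm N) as [H1 H2]. destruct (nrm_Phi r N lam sig e A S0 _ _ d Hr H1 H2 Hd). lra.
Qed.

Lemma It_AB lam sig e A S0 m :
  AB m (fst (It lam sig e A S0 m)) (fst (It lam sig e A S0 (S m))) /\
  AB m (snd (It lam sig e A S0 m)) (snd (It lam sig e A S0 (S m))).
Proof.
  induction m. split; intros k Hk; lia.
  destruct IHm as [H1 H2]. simpl in *. split.
  apply AB_Phia; auto. apply AB_Phis; auto.
Qed.

Lemma It_AB2 lam sig e A S0 m m' : (m <= m')%nat ->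
  AB m (fst (It lam sig e A S0 m)) (fst (It lam sig e A S0 m')) /\
  AB m (snd (It lam sig e A S0 m)) (snd (It lam sig e A S0 m')).
Proof.
  intros H. induction H. split; apply AB_refl.
  destruct IHle as [H1 H2]. destruct (It_AB lam sig e A S0 m0) as [H3 H4].
  split; eapply AB_trans; eauto; eapply AB_mono; eauto.
Qed.

Definition Ya lam sig e A S0 (n : nat) : R := fst (It lam sig e A S0 (S n)) n.
Definition Ys lam sig e A S0 (n : nat) : R := snd (It lam sig e A S0 (S n)) n.

Lemma Y_AB lam sig e A S0 N :
  AB (S N) (Ya lam sig e A S0) (fst (It lam sig e A S0 (S N))) /\
  AB (S N) (Ys lam sig e A S0) (snd (It lam sig e A S0 (S N))).
Proof.
  split; intros k Hk; unfold Ya, Ys; destruct (It_AB2 lam sig e A S0 (S k) (S N)) as [H1 H2]; try lia.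
  apply H1; lia. apply H2; lia.
Qed.

Lemma Y_fix lam sig e A S0 n :
  Phia lam sig e A S0 (Ya lam sig e A S0) (Ys lam sig e A S0) n = Ya lam sig e A S0 n /\
  Phis lam sig e A S0 (Ya lam sig e A S0) (Ys lam sig e A S0) n = Ys lam sig e A S0 n.
Proof.
  destruct (Y_AB lam sig e A S0 n) as [H1 H2].
  assert (E1 := AB_Phia _ lam sig e A S0 _ _ _ _ H1 H2).
  assert (E2 := AB_Phis _ lam sig e A S0 _ _ _ _ H1 H2).
  destruct (It_AB2 lam sig e A S0 (S n) (S (S n))) as [H3 H4]; [lia|].
  split.
  - rewrite (E1 n) by lia. change (Phia lam sig e A S0 (fst (It lam sig e A S0 (S n))) (snd (It lam sig e A S0 (S n))) n)
      with (fst (It lam sig e A S0 (S (S n))) n). rewrite <- H3 by lia. reflexivity.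
  - rewrite (E2 n) by lia. change (Phis lam sig e A S0 (fst (It lam sig e A S0 (S n))) (snd (It lam sig e A S0 (S n))) n)
      with (snd (It lam sig e A S0 (S (S n))) n). rewrite <- H4 by lia. reflexivity.
Qed.

Lemma nrm_AB r N u v : AB (S N) u v -> nrm r N u = nrm r N v.
Proof. intros H. unfold nrm. apply sum_eq. intros i Hi. rewrite H; auto; lia. Qed.

Lemma Phi0 lam sig e A S0 a s : Phia lam sig e A S0 a s 0%nat = 0 /\ Phis lam sig e A S0 a s 0%nat = 0.
Proof.
  unfold Phia, Phis, Q1seq, Q2seq, Hseq, sscal, splus, sh. rewrite !cv0. split; ring.
Qed.

Lemma KP_pos lam sig e A S0 : 0 <= KP lam sig e A S0.
Proof.
  unfold KP. apply Rmult_le_pos. apply Rmult_le_pos. apply Rabs_pos.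
  repeat (apply Rplus_le_le_0_compat); apply Rabs_pos. apply KQ_pos.
Qed.

Lemma Y0 lam sig e A S0 : Ya lam sig e A S0 0%nat = 0 /\ Ys lam sig e A S0 0%nat = 0.
Proof. unfold Ya, Ys. simpl. apply Phi0. Qed.

Lemma nrm_zs_le r N u B : 0 <= r -> nrm r N u <= B -> nrm r N (zs u) <= B.
Proof. intros. eapply Rle_trans. apply nrm_zs; auto. auto. Qed.

Lemma Q1v_ok sig e A S0 a s h x y :
  is_pseries a h x -> is_pseries s h y -> a 0%nat = 0 -> s 0%nat = 0 ->
  Rbar_lt (Rabs h) (CV_radius (zs a)) -> Rbar_lt (Rabs h) (CV_radius (zs (cv a a))) ->
  Rbar_lt (Rabs h) (CV_radius (zs (cv a (cv a a)))) ->
  Rbar_lt (Rabs h) (CV_radius (zs s)) -> Rbar_lt (Rabs h) (CV_radius (zs (cv s s))) ->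
  Rbar_lt (Rabs h) (CV_radius (zs (cv s (cv s s)))) ->
  is_pseries (Q1seq sig e A S0 a s) h (Q1v sig e A S0 h x y) /\
  is_pseries (Q2seq sig e A S0 a s) h (Q2v sig e A S0 h x y).
Proof.
  intros Ha Hs Ha0 Hs0 C1 C2 C3 C4 C5 C6.
  assert (EA := ev_H A a h x Ha Ha0 C1 C2 C3).
  assert (ES := ev_H S0 s h y Hs Hs0 C4 C5 C6).
  unfold Q1seq, Q1v, Q2seq, Q2v. split.
  - apply ev_plus; [apply ev_scal; exact ES | ]. apply ev_plus; [apply ev_scal; exact EA|].
    apply ev_sh. apply ev_plus; [apply ev_d0|]. apply ev_plus; [apply ev_scal; exact Hs|].
    apply ev_plus; [apply ev_scal; exact ES|]. apply ev_plus; apply ev_scal; assumption.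
  - apply ev_plus; [apply ev_scal; exact ES | ]. apply ev_plus; [apply ev_scal; exact EA|].
    apply ev_sh. apply ev_plus; [apply ev_d0|]. apply ev_plus; apply ev_scal; assumption.
Qed.

Lemma LOC lam sig e A S0 d0' : 0 < d0' -> exists r, 0 < r /\
  (forall N, nrm r N (Ya lam sig e A S0) <= d0' /\ nrm r N (Ys lam sig e A S0) <= d0') /\
  forall h, Rabs h < r -> exists x y,
    is_pseries (Ya lam sig e A S0) h x /\ is_pseries (Ys lam sig e A S0) h y /\
    Rabs x <= d0' /\ Rabs y <= d0' /\
    x = / Dt lam sig e A S0 * (a22 lam sig S0 * Q1v sig e A S0 h x y + a12 lam sig e S0 * Q2v sig e A S0 h x y) /\
    y = / Dt lam sig e A S0 * (a21 lam sig e A * Q1v sig e A S0 h x y + a11 lam sig e A * Q2v sig e A S0 h x y).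
Proof.
  intros Hd0. set (K := KP lam sig e A S0). assert (HK : 0 <= K) by apply KP_pos.
  set (d := Rmin d0' (Rmin 1 (/ (2 * (K + 1))))).
  assert (Hd1 : 0 < d). { unfold d. apply Rmin_pos; auto. apply Rmin_pos. lra. apply Rinv_0_lt_compat. lra. }
  assert (Hd2 : d <= d0') by apply Rmin_l.
  assert (Hd3 : d <= 1). { unfold d. eapply Rle_trans. apply Rmin_r. apply Rmin_l. }
  assert (Hd4 : d <= / (2 * (K + 1))). { unfold d. eapply Rle_trans. apply Rmin_r. apply Rmin_r. }
  assert (Hd5 : 2 * K * d <= 1).
  { apply Rmult_le_compat_l with (r := 2 * (K + 1)) in Hd4; [|lra].
    rewrite Rinv_r in Hd4 by lra. lra. }
  set (r := d^2). assert (Hr : 0 < r) by (unfold r; apply pow_lt; lra).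
  assert (HKd : K * (d^2 + r) <= d).
  { unfold r. assert (T := Rmult_le_compat_r d _ _ (Rlt_le _ _ Hd1) Hd5). simpl. lra. }
  assert (HB := It_bound lam sig e A S0 r d (Rlt_le _ _ Hr) (conj (Rlt_le _ _ Hd1) Hd3) HKd).
  assert (NB : forall N, nrm r N (Ya lam sig e A S0) <= d /\ nrm r N (Ys lam sig e A S0) <= d).
  { intros N. destruct (Y_AB lam sig e A S0 N) as [H1 H2]. rewrite (nrm_AB _ _ _ _ H1), (nrm_AB _ _ _ _ H2).
    apply HB. }
  exists r. split; auto. split. intros N; destruct (NB N); split; lra.
  intros h Hh.
  set (a := Ya lam sig e A S0). set (s := Ys lam sig e A S0).
  destruct (Y0 lam sig e A S0) as [Ha0 Hs0]. fold a s in Ha0, Hs0.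
  assert (Hr0 : 0 <= r) by lra.
  assert (CVa : forall u B, (forall N, nrm r N u <= B) -> Rbar_lt (Rabs h) (CV_radius u)).
  { intros u B HuB. eapply CV_lt; eauto. }
  assert (Na : forall N, nrm r N a <= d) by (intros N; apply NB).
  assert (Ns : forall N, nrm r N s <= d) by (intros N; apply NB).
  assert (N2 : forall u, (forall N, nrm r N u <= d) -> forall N, nrm r N (cv u u) <= d * d).
  { intros u Hu N. eapply Rle_trans. apply nrm_cv; auto. assert (0 <= nrm r N u) by (apply nrm_nonneg; auto).
    specialize (Hu N). apply Rmult_le_compat; auto. }
  assert (N3 : forall u, (forall N, nrm r N u <= d) -> forall N, nrm r N (cv u (cv u u)) <= d * (d * d)).
  { intros u Hu N. eapply Rle_trans. apply nrm_cv; auto. assert (0 <= nrm r N u) by (apply nrm_nonneg; auto).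
    assert (0 <= nrm r N (cv u u)) by (apply nrm_nonneg; auto). specialize (N2 u Hu N).
    specialize (Hu N). apply Rmult_le_compat; auto. }
  assert (C1 : Rbar_lt (Rabs h) (CV_radius (zs a))) by (apply (CVa _ d); intros; apply nrm_zs_le; auto).
  assert (C2 : Rbar_lt (Rabs h) (CV_radius (zs (cv a a)))) by (apply (CVa _ (d*d)); intros; apply nrm_zs_le; auto).
  assert (C3 : Rbar_lt (Rabs h) (CV_radius (zs (cv a (cv a a))))) by (apply (CVa _ (d*(d*d))); intros; apply nrm_zs_le; auto).
  assert (C4 : Rbar_lt (Rabs h) (CV_radius (zs s))) by (apply (CVa _ d); intros; apply nrm_zs_le; auto).
  assert (C5 : Rbar_lt (Rabs h) (CV_radius (zs (cv s s)))) by (apply (CVa _ (d*d)); intros; apply nrm_zs_le; auto).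
  assert (C6 : Rbar_lt (Rabs h) (CV_radius (zs (cv s (cv s s))))) by (apply (CVa _ (d*(d*d))); intros; apply nrm_zs_le; auto).
  assert (Ea : is_pseries a h (PSeries a h)). { apply PSeries_correct. apply CV_radius_inside. apply (CVa _ d); auto. }
  assert (Es : is_pseries s h (PSeries s h)). { apply PSeries_correct. apply CV_radius_inside. apply (CVa _ d); auto. }
  set (x := PSeries a h) in *. set (y := PSeries s h) in *.
  exists x, y. split; auto. split; auto.
  assert (Hh' : Rabs h <= r) by lra.
  split. assert (T := ev_bound a h x r d Ea Hh' Na). lra.
  split. assert (T := ev_bound s h y r d Es Hh' Ns). lra.
  destruct (Q1v_ok sig e A S0 a s h x y Ea Es Ha0 Hs0 C1 C2 C3 C4 C5 C6) as [Q1 Q2].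
  split.
  - assert (P : is_pseries (Phia lam sig e A S0 a s) h
       (/ Dt lam sig e A S0 * (a22 lam sig S0 * Q1v sig e A S0 h x y + a12 lam sig e S0 * Q2v sig e A S0 h x y))).
    { unfold Phia. apply ev_scal. apply ev_plus; apply ev_scal; auto. }
    eapply is_pseries_ext in P. 2: intros n; apply (Y_fix lam sig e A S0 n).
    apply is_pseries_unique in P. exact P.
  - assert (P : is_pseries (Phis lam sig e A S0 a s) h
       (/ Dt lam sig e A S0 * (a21 lam sig e A * Q1v sig e A S0 h x y + a11 lam sig e A * Q2v sig e A S0 h x y))).
    { unfold Phis. apply ev_scal. apply ev_plus; apply ev_scal; auto. }
    eapply is_pseries_ext in P. 2: intros n; apply (Y_fix lam sig e A S0 n).
    apply is_pseries_unique in P. exact P.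
Qed.

Lemma cv1 u v : cv u v 1%nat = 0.
Proof. unfold cv, PS_mult; simpl; ring. Qed.

Lemma Y1 lam sig e A S0 :
  Ya lam sig e A S0 1%nat = / Dt lam sig e A S0 * (a22 lam sig S0 * (sig*S0^4 - 2*sig*A^4) + a12 lam sig e S0 * (sig*A^4)) /\
  Ys lam sig e A S0 1%nat = / Dt lam sig e A S0 * (a21 lam sig e A * (sig*S0^4 - 2*sig*A^4) + a11 lam sig e A * (sig*A^4)).
Proof.
  destruct (Y_fix lam sig e A S0 1) as [E1 E2]. destruct (Y0 lam sig e A S0) as [H1 H2].
  rewrite <- E1, <- E2. unfold Phia, Phis, Q1seq, Q2seq, Hseq, sscal, splus, sh, d0.
  rewrite !cv0, !cv1, H1, H2. split; ring.
Qed.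

Definition FaP lam sig e A S0 := - lam * (A - S0) + e * sig * S0^4 - 2 * e * sig * A^4.
Definition FsP lam sig qb e A S0 := - lam * (S0 - A) - sig * S0^4 + e * sig * A^4 + qb.

Lemma alg_step lam sig qb e A S0 h x y : Dt lam sig e A S0 <> 0 ->
  FaP lam sig e A S0 = 0 -> FsP lam sig qb e A S0 = 0 ->
  x = / Dt lam sig e A S0 * (a22 lam sig S0 * Q1v sig e A S0 h x y + a12 lam sig e S0 * Q2v sig e A S0 h x y) ->
  y = / Dt lam sig e A S0 * (a21 lam sig e A * Q1v sig e A S0 h x y + a11 lam sig e A * Q2v sig e A S0 h x y) ->
  FaP lam sig (e + h) (A + x) (S0 + y) = 0 /\ FsP lam sig qb (e + h) (A + x) (S0 + y) = 0.
Proof.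
  intros HD Ha Hs Hx Hy.
  set (Q1 := Q1v sig e A S0 h x y) in *. set (Q2 := Q2v sig e A S0 h x y) in *.
  assert (L1 : - a11 lam sig e A * x + a12 lam sig e S0 * y + Q1 = 0).
  { rewrite Hx, Hy. unfold Dt in *. field. auto. }
  assert (L2 : a21 lam sig e A * x - a22 lam sig S0 * y + Q2 = 0).
  { rewrite Hx, Hy. unfold Dt in *. field. auto. }
  split.
  - replace (FaP lam sig (e + h) (A + x) (S0 + y)) with
      (FaP lam sig e A S0 + (- a11 lam sig e A * x + a12 lam sig e S0 * y + Q1)).
    rewrite Ha, L1; ring.
    unfold FaP, Q1, Q1v, Hval, a11, a12. ring.
  - replace (FsP lam sig qb (e + h) (A + x) (S0 + y)) with
      (FsP lam sig qb e A S0 + (a21 lam sig e A * x - a22 lam sig S0 * y + Q2)).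
    rewrite Hs, L2; ring.
    unfold FsP, Q2, Q2v, Hval, a21, a22. ring.
Qed.


Lemma pow_lt4 x y : 0 <= x < y -> x^4 < y^4.
Proof. intros H. assert (x^2 < y^2) by (simpl; nra). assert (0 <= x^2) by apply pow2_ge_0.
  replace (x^4) with (x^2*x^2) by ring. replace (y^4) with (y^2*y^2) by ring. nra. Qed.

Lemma cube_half A S0 : 0 < A < S0 -> S0^4 <= 2*A^4 -> S0^3 < 2*A^3.
Proof.
  intros [H1 H2] H3. destruct (Rlt_or_le (S0^3) (2*A^3)) as [H|H]; auto.
  exfalso. assert (A * S0^3 < S0 * S0^3). apply Rmult_lt_compat_r. apply pow_lt; lra. lra.
  assert (2*A^4 <= A*S0^3). replace (2*A^4) with (A*(2*A^3)) by ring. apply Rmult_le_compat_l; lra.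
  replace (S0*S0^3) with (S0^4) in H0 by ring. lra.
Qed.

Lemma DET_pos lam sig e A S0 : 0 <= lam -> 0 < sig -> 0 < e < 2 -> 0 < A < S0 -> S0^4 <= 2*A^4 ->
  0 < Dt lam sig e A S0.
Proof.
  intros Hl Hs He HA H4. assert (C := cube_half A S0 HA H4).
  assert (E : Dt lam sig e A S0 = 4*sig*lam*(S0^3*(1-e) + e*A^3) + 16*e*sig^2*S0^3*A^3*(2-e)).
  { unfold Dt, a11, a12, a21, a22. ring. }
  rewrite E.
  assert (P1 : 0 < S0^3*(1-e) + e*A^3).
  { assert (e*S0^3 < e*(2*A^3)) by (apply Rmult_lt_compat_l; lra).
    assert (0 < S0^3) by (apply pow_lt; lra). nra. }
  assert (0 < A^3) by (apply pow_lt; lra). assert (0 < S0^3) by (apply pow_lt; lra).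
  assert (0 <= 4*sig*lam*(S0^3*(1-e) + e*A^3)).
  { apply Rmult_le_pos; [|lra]. apply Rmult_le_pos; lra. }
  assert (0 < 16*e*sig^2*S0^3*A^3*(2-e)).
  { repeat apply Rmult_lt_0_compat; try lra; try (apply pow_lt; lra). }
  lra.
Qed.

Lemma POSP lam sig qb e A S0 : 0 <= lam -> 0 < sig -> 0 < e -> 0 < qb -> 0 <= A -> 0 <= S0 ->
  FaP lam sig e A S0 = 0 -> FsP lam sig qb e A S0 = 0 -> 0 < A < S0 /\ S0^4 <= 2*A^4.
Proof.
  intros Hl Hs He Hq HA HS Fa Fs. unfold FaP, FsP in *.
  assert (HS0 : 0 < S0).
  { destruct HS as [HS|HS]; auto. subst S0. exfalso.
    assert (0 <= lam * A) by (apply Rmult_le_pos; auto).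
    assert (0 <= e*sig*A^4) by (apply Rmult_le_pos; [nra| apply pow_le; auto]).
    assert (e*sig*A^4 = 0) by (simpl in Fa; nra).
    assert (A^4 = 0). { apply Rmult_integral in H1. destruct H1; auto. nra. }
    assert (A = 0) by (destruct (Req_dec A 0); auto; exfalso; apply (pow_nonzero A 4); auto). subst A. simpl in Fs. lra. }
  assert (HA0 : 0 < A).
  { destruct HA as [HA|HA]; auto. subst A. exfalso.
    assert (0 <= lam * S0) by (apply Rmult_le_pos; lra).
    assert (0 < e*sig*S0^4) by (apply Rmult_lt_0_compat; [nra| apply pow_lt; auto]). simpl in Fa. nra. }
  assert (AS : A < S0).
  { destruct (Rlt_or_le A S0) as [H|H]; auto. exfalso.
    assert (S0^4 <= A^4) by (apply pow_incr; lra).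
    assert (0 < A^4) by (apply pow_lt; auto).
    assert (0 <= lam * (A - S0)) by (apply Rmult_le_pos; lra).
    assert (0 < e*sig) by nra.
    assert (e*sig*S0^4 <= e*sig*A^4) by (apply Rmult_le_compat_l; lra).
    assert (0 < e*sig*A^4) by nra. lra. }
  split. lra.
  assert (0 <= lam * (S0 - A)) by (apply Rmult_le_pos; lra).
  assert (0 < e*sig) by nra.
  assert (e*sig*(S0^4 - 2*A^4) <= 0) by nra.
  destruct (Rle_or_lt (S0^4) (2*A^4)); auto. exfalso.
  assert (0 < e*sig*(S0^4 - 2*A^4)) by (apply Rmult_lt_0_compat; lra). lra.
Qed.

Lemma signS lam sig e A S0 : 0 <= lam -> 0 < sig -> 0 < e -> 0 < A < S0 ->
  0 < a21 lam sig e A * (sig*S0^4 - 2*sig*A^4) + a11 lam sig e A * (sig*A^4).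
Proof.
  intros Hl Hs He HA.
  replace (a21 lam sig e A * (sig*S0^4 - 2*sig*A^4) + a11 lam sig e A * (sig*A^4))
    with (sig*(lam*(S0^4 - A^4) + 4*e*sig*A^3*S0^4)) by (unfold a21, a11; ring).
  assert (A^4 < S0^4) by (apply pow_lt4; lra).
  apply Rmult_lt_0_compat; auto.
  assert (0 <= lam*(S0^4 - A^4)) by (apply Rmult_le_pos; lra).
  assert (0 < 4*e*sig*A^3*S0^4). repeat apply Rmult_lt_0_compat; try lra; apply pow_lt; lra. lra.
Qed.

Lemma signA lam sig e A S0 : 0 <= lam -> 0 < sig -> 1 < e -> 0 < A < S0 ->
  0 < a22 lam sig S0 * (sig*S0^4 - 2*sig*A^4) + a12 lam sig e S0 * (sig*A^4).
Proof.
  intros Hl Hs He HA.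
  replace (a22 lam sig S0 * (sig*S0^4 - 2*sig*A^4) + a12 lam sig e S0 * (sig*A^4))
    with (sig*(lam*(S0^4 - A^4) + 4*sig*S0^3*(S0^4 - A^4 + (e-1)*A^4))) by (unfold a22, a12; ring).
  assert (A^4 < S0^4) by (apply pow_lt4; lra).
  apply Rmult_lt_0_compat; auto.
  assert (0 <= lam*(S0^4 - A^4)) by (apply Rmult_le_pos; lra).
  assert (0 < (e-1)*A^4) by (apply Rmult_lt_0_compat; [lra| apply pow_lt; lra]).
  assert (0 < 4*sig*S0^3*(S0^4 - A^4 + (e-1)*A^4)).
  repeat apply Rmult_lt_0_compat; try lra; apply pow_lt; lra. lra.
Qed.

Lemma kdef : exists k, 0 < k < 1 /\ k^4 = /2 /\ /2 <= k^3.
Proof.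
  set (k := sqrt (sqrt (/2))).
  assert (H2 : 0 < / 2) by lra.
  assert (Hk0 : 0 < k) by (apply sqrt_lt_R0; apply sqrt_lt_R0; auto).
  assert (Hk4 : k^4 = /2).
  { replace (k^4) with ((k*k)*(k*k)) by ring. unfold k. rewrite sqrt_sqrt.
    rewrite sqrt_sqrt; lra. left; apply sqrt_lt_R0; auto. }
  assert (Hk1 : k < 1).
  { destruct (Rlt_or_le k 1); auto. assert (1^4 <= k^4) by (apply pow_incr; lra). simpl in *; lra. }
  exists k. split. lra. split; auto.
  rewrite <- Hk4. replace (k^4) with (k^3 * k) by ring. assert (0 < k^3) by (apply pow_lt; lra). nra.
Qed.

Lemma ge_k k A S0 : 0 < k -> k^4 = /2 -> 0 < A -> 0 < S0 -> S0^4 <= 2*A^4 -> k*S0 <= A.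
Proof.
  intros Hk Hk4 HA HS H. destruct (Rle_or_lt (k*S0) A) as [H1|H1]; auto. exfalso.
  assert (A^4 < (k*S0)^4) by (apply pow_lt4; lra).
  rewrite Rpow_mult_distr, Hk4 in H0. lra.
Qed.

Lemma NOLT lam sig qb e A S0 A' S' : 0 <= lam -> 0 < sig -> 0 < e < 2 ->
  0 < A < S0 -> S0^4 <= 2*A^4 -> 0 < A' < S' -> S'^4 <= 2*A'^4 ->
  FaP lam sig e A S0 = 0 -> FsP lam sig qb e A S0 = 0 ->
  FaP lam sig e A' S' = 0 -> FsP lam sig qb e A' S' = 0 -> S0 < S' -> False.
Proof.
  intros Hl Hs He HA H4 HA' H4' Fa Fs Fa' Fs' HSS. unfold FaP, FsP in *.
  assert (Hes : 0 < e*sig) by nra.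
  assert (AA : A < A').
  { destruct (Rlt_or_le A A') as [H|H]; auto. exfalso.
    assert (S0^4 < S'^4) by (apply pow_lt4; lra).
    assert (A'^4 <= A^4) by (apply pow_incr; lra).
    assert (lam*A' <= lam*A) by (apply Rmult_le_compat_l; lra).
    assert (lam*S0 <= lam*S') by (apply Rmult_le_compat_l; lra).
    assert (e*sig*A'^4 <= e*sig*A^4) by (apply Rmult_le_compat_l; lra).
    assert (e*sig*S0^4 < e*sig*S'^4) by (apply Rmult_lt_compat_l; lra).
    lra. }
  assert (P0 : S0^4 < S'^4) by (apply pow_lt4; lra).
  assert (Q0 : A^4 < A'^4) by (apply pow_lt4; lra).
  assert (Sum : (e-1)*(S'^4 - S0^4) = e*(A'^4 - A^4)).
  { apply Rmult_eq_reg_l with sig; [|lra]. nra. }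
  destruct (Rle_or_lt e 1) as [He1|He1].
  { assert (0 <= (1-e)*(S'^4 - S0^4)) by (apply Rmult_le_pos; lra).
    assert (0 < e*(A'^4 - A^4)) by (apply Rmult_lt_0_compat; lra). lra. }
  set (P := S'^4 - S0^4) in *. set (Qd := A'^4 - A^4) in *.
  assert (HP : 0 < P) by (unfold P; lra). assert (HQd : 0 < Qd) by (unfold Qd; lra).
  assert (Q2 : 2*Qd < P).
  { assert (e*(2*Qd - P) = (e-2)*P) by (replace (e*(2*Qd - P)) with (2*(e*Qd) - e*P) by ring; rewrite <- Sum; ring). assert (0 < (2-e)*P) by (apply Rmult_lt_0_compat; lra).
    destruct (Rlt_or_le (2*Qd - P) 0); [lra|]. assert (0 <= e*(2*Qd - P)) by (apply Rmult_le_pos; lra). lra. }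
  assert (Diff : lam*((S' - S0) - (A' - A)) = e*sig*(2*Qd - P)).
  { unfold P, Qd. nra. }
  assert (Dal : S' - S0 < A' - A).
  { destruct (Rlt_or_le (S' - S0) (A' - A)) as [H|H]; auto. exfalso.
    assert (0 <= lam*((S' - S0) - (A' - A))) by (apply Rmult_le_pos; lra).
    assert (0 < e*sig*(P - 2*Qd)) by (apply Rmult_lt_0_compat; lra). lra. }
  destruct kdef as [k [Hk [Hk4 Hk3]]].
  assert (K1 := ge_k k A S0 (proj1 Hk) Hk4 (proj1 HA) (ltac:(lra)) H4).
  assert (K2 := ge_k k A' S' (proj1 Hk) Hk4 (proj1 HA') (ltac:(lra)) H4').
  set (SA := A'^3 + A'^2*A + A'*A^2 + A^3).
  set (SS := S'^3 + S'^2*S0 + S'*S0^2 + S0^3).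
  assert (EQd : Qd = (A' - A)*SA) by (unfold Qd, SA; ring).
  assert (EP : P = (S' - S0)*SS) by (unfold P, SS; ring).
  assert (HSS0 : 0 < SS) by (unfold SS; assert (0 < S'^3) by (apply pow_lt; lra);
     assert (0 < S'^2*S0) by (apply Rmult_lt_0_compat; [apply pow_lt|]; lra);
     assert (0 < S'*S0^2) by (apply Rmult_lt_0_compat; [|apply pow_lt]; lra);
     assert (0 < S0^3) by (apply pow_lt; lra); lra).
  assert (Mon : k^3 * SS <= SA).
  { unfold SA, SS.
    assert (m1 : (k*S')^3 <= A'^3) by (apply pow_incr; nra).
    assert (m2 : (k*S')^2 * (k*S0) <= A'^2 * A).
    { apply Rmult_le_compat. apply pow_le; nra. nra. apply pow_incr; nra. lra. }
    assert (m3 : (k*S') * (k*S0)^2 <= A' * A^2).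
    { apply Rmult_le_compat. nra. apply pow_le; nra. lra. apply pow_incr; nra. }
    assert (m4 : (k*S0)^3 <= A^3) by (apply pow_incr; nra).
    replace (k^3 * (S'^3 + S'^2*S0 + S'*S0^2 + S0^3)) with
      ((k*S')^3 + (k*S')^2*(k*S0) + (k*S')*(k*S0)^2 + (k*S0)^3) by ring. lra. }
  assert (T1 : SS <= 2*SA).
  { assert (SS = 2 * (/2 * SS)) by field. assert (/2*SS <= k^3*SS) by (apply Rmult_le_compat_r; lra). lra. }
  assert (T2 : (S' - S0)*SS < (A' - A)*SS) by (apply Rmult_lt_compat_r; lra).
  assert (T3 : (A' - A)*SS <= (A' - A)*(2*SA)) by (apply Rmult_le_compat_l; lra).
  lra.
Qed.

Lemma UNIQP lam sig qb e A S0 A' S' : 0 <= lam -> 0 < sig -> 0 < e < 2 ->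
  0 < A < S0 -> S0^4 <= 2*A^4 -> 0 < A' < S' -> S'^4 <= 2*A'^4 ->
  FaP lam sig e A S0 = 0 -> FsP lam sig qb e A S0 = 0 ->
  FaP lam sig e A' S' = 0 -> FsP lam sig qb e A' S' = 0 -> A = A' /\ S0 = S'.
Proof.
  intros Hl Hs He HA H4 HA' H4' Fa Fs Fa' Fs'.
  destruct (Rtotal_order S0 S') as [H|[H|H]].
  - exfalso; eapply (NOLT lam sig qb e A S0 A' S'); eauto.
  - subst S'. split; auto. unfold FaP in *.
    assert (Hes : 0 < e*sig) by nra.
    destruct (Rtotal_order A A') as [H|[H|H]]; auto; exfalso.
    + assert (A^4 < A'^4) by (apply pow_lt4; lra).
      assert (lam*A <= lam*A') by (apply Rmult_le_compat_l; lra).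
      assert (e*sig*A^4 < e*sig*A'^4) by (apply Rmult_lt_compat_l; lra). lra.
    + assert (A'^4 < A^4) by (apply pow_lt4; lra).
      assert (lam*A' <= lam*A) by (apply Rmult_le_compat_l; lra).
      assert (e*sig*A'^4 < e*sig*A^4) by (apply Rmult_lt_compat_l; lra). lra.
  - exfalso; eapply (NOLT lam sig qb e A' S' A S0); eauto.
Qed.


Lemma cR_plus (f g : R -> R) x : continuous f x -> continuous g x -> continuous (fun u => f u + g u) x.
Proof. intros; exact (continuous_plus f g x H H0). Qed.
Lemma cR_mult (f g : R -> R) x : continuous f x -> continuous g x -> continuous (fun u => f u * g u) x.
Proof. intros; exact (continuous_mult f g x H H0). Qed.
Lemma cR_const (c x : R) : continuous (fun _ => c) x.
Proof. apply continuous_const. Qed.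
Lemma cR_sub (f : R -> R) c x : continuous f x -> continuous (fun u => f u - c) x.
Proof. intros; exact (continuous_minus f (fun _ => c) x H (continuous_const c x)). Qed.
Lemma cR_exp (k x : R) : continuous (fun u => exp (k * u)) x.
Proof.
  apply continuous_comp. apply (cR_mult (fun _ => k) (fun u => u)). apply cR_const. apply continuous_id.
  apply (ex_derive_continuous (K:=R_AbsRing) (V:=R_NormedModule) exp). exists (exp (k*x)). apply is_derive_exp.
Qed.

Lemma dR_plus (f g : R -> R) x df dg : is_derive f x df -> is_derive g x dg -> is_derive (fun u => f u + g u) x (df + dg).
Proof. intros; exact (is_derive_plus f g x df dg H H0). Qed.
Lemma dR_mult (f g : R -> R) x df dg : is_derive f x df -> is_derive g x dg ->
  is_derive (fun u => f u * g u) x (df * g x + f x * dg).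
Proof. intros. exact (is_derive_mult f g x df dg H H0 Rmult_comm). Qed.
Lemma dR_sub (f : R -> R) c x df : is_derive f x df -> is_derive (fun u => f u - c) x df.
Proof.
  intros H. assert (H2 := is_derive_minus f (fun _ => c) x df zero H (is_derive_const c x)).
  replace df with (minus df zero). exact H2. unfold minus, zero, opp, plus; simpl. ring.
Qed.
Lemma dR_exp (k x : R) : is_derive (fun u => exp (k * u)) x (k * exp (k * x)).
Proof. auto_derive. auto. ring. Qed.

Lemma decay_abstract (V dV : R -> R) mu s : 0 <= s ->
  (forall u, 0 < u < s -> is_derive V u (dV u)) ->
  (forall u, 0 <= u <= s -> continuous V u) ->
  (forall u, 0 < u < s -> dV u + 2 * mu * V u <= 0) ->
  V s * exp (2 * mu * s) <= V 0.
Proof.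
  intros Hs HD HC HN.
  set (W := fun u => V u * exp (2 * mu * u)).
  set (df := fun u => if Rlt_dec 0 u then if Rlt_dec u s then (dV u + 2*mu*V u) * exp (2*mu*u) else 0 else 0).
  destruct (MVT_gen W 0 s df) as [c [Hc E]].
  - intros u Hu. rewrite Rmin_left, Rmax_right in Hu by lra.
    unfold df. destruct (Rlt_dec 0 u); [|lra]. destruct (Rlt_dec u s); [|lra].
    unfold W. replace ((dV u + 2 * mu * V u) * exp (2 * mu * u)) with
      (dV u * exp (2 * mu * u) + V u * (2 * mu * exp (2 * mu * u))) by ring.
    apply (dR_mult V (fun u => exp (2*mu*u)) u (dV u) (2*mu*exp(2*mu*u))). apply HD; lra. apply (dR_exp (2*mu)).
  - intros u Hu. rewrite Rmin_left, Rmax_right in Hu by lra. apply continuity_pt_filterlim.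
    unfold W. apply (cR_mult V (fun u => exp (2*mu*u))). apply HC; lra. apply (cR_exp (2*mu)).
  - rewrite Rmin_left, Rmax_right in Hc by lra.
    assert (df c <= 0).
    { unfold df. destruct (Rlt_dec 0 c); [|lra]. destruct (Rlt_dec c s); [|lra].
      assert (0 < exp (2*mu*c)) by apply exp_pos. specialize (HN c (conj r r0)). nra. }
    unfold W in E. rewrite Rmult_0_r, exp_0, Rmult_1_r in E.
    assert (0 <= - df c * (s - 0)) by (apply Rmult_le_pos; lra). lra.
Qed.

Lemma cont_eps (f : R -> R) x : continuous f x -> forall eps, 0 < eps ->
  exists del, 0 < del /\ forall u, Rabs (u - x) < del -> Rabs (f u - f x) < eps.
Proof.
  intros H eps He. apply continuity_pt_filterlim in H.
  destruct (H eps He) as [del [Hd Hf]]. exists del. split; auto.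
  intros u Hu. destruct (Req_dec u x) as [E|E]. subst; rewrite Rminus_eq_0, Rabs_R0; auto.
  apply Hf. split. unfold D_x, no_cond; auto. simpl. unfold R_dist. auto.
Qed.

Lemma trap (V : R -> R) T t L mu : 0 <= mu ->
  (forall u, 0 <= u < T -> continuous V u) -> (forall u, 0 <= V u) -> V 0 < L ->
  (forall s, 0 <= s < T -> (forall u, 0 <= u <= s -> V u < L) -> V s * exp (2 * mu * s) <= V 0) ->
  0 <= t < T -> forall u, 0 <= u <= t -> V u < L.
Proof.
  intros Hmu HC HV HL HD Ht.
  set (E := fun s => 0 <= s <= t /\ forall u, 0 <= u <= s -> V u < L).
  assert (Eb : bound E). { exists t. intros s [Hs _]. lra. }
  assert (E0 : exists s, E s). { exists 0. split. lra. intros u Hu. replace u with 0 by lra. auto. }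
  destruct (completeness E Eb E0) as [m [Hub Hlub]].
  assert (Hm0 : 0 <= m) by (apply Hub; split; [lra| intros u Hu; replace u with 0 by lra; auto]).
  assert (Hmt : m <= t) by (apply Hlub; intros s [Hs _]; lra).
  assert (C1 : forall u, 0 <= u < m -> V u < L /\ V u <= V 0).
  { intros u Hu. assert (exists s, E s /\ u < s).
    { apply Classical_Prop.NNPP. intros N. assert (m <= u). apply Hlub. intros s Es.
      destruct (Rle_or_lt s u); auto. exfalso; apply N; exists s; auto. lra. }
    destruct H as [s [[Hs1 Hs2] Hus]]. split. apply Hs2; lra.
    assert (Vd := HD u (ltac:(lra)) (fun v Hv => Hs2 v (ltac:(lra)))).
    assert (1 <= exp (2*mu*u)). { assert (0 <= 2*mu*u) by nra. assert (Te := exp_ineq1_le (2*mu*u)). lra. }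
    assert (0 <= V u) by auto. nra. }
  assert (C2 : V m <= V 0).
  { destruct (Rle_or_lt (V m) (V 0)) as [H|H]; auto. exfalso.
    destruct Hm0 as [Hm0|Hm0].
    2:{ rewrite <- Hm0 in H. lra. }
    destruct (cont_eps V m (HC m (ltac:(lra))) (V m - V 0) (ltac:(lra))) as [del [Hdel Hf]].
    set (u := Rmax 0 (m - del/2)).
    assert (Hu1 : 0 <= u) by apply Rmax_l.
    assert (Hu2 : u < m) by (unfold u; apply Rmax_lub_lt; lra).
    assert (Hu3 : Rabs (u - m) < del).
    { unfold u. apply Rmax_case_strong; intros; rewrite Rabs_left by lra; lra. }
    specialize (Hf u Hu3). destruct (C1 u (conj Hu1 Hu2)) as [_ H2].
    rewrite Rabs_lt_between in Hf. lra. }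
  assert (Em : E m).
  { split. lra. intros u Hu. destruct (Req_dec u m). subst u. lra. apply C1; lra. }
  assert (Hmt' : m = t).
  { destruct Hmt as [Hmt|Hmt]; auto. exfalso.
    destruct (cont_eps V m (HC m (ltac:(lra))) (L - V m) (ltac:(lra))) as [del [Hdel Hf]].
    set (s := Rmin (m + del/2) t).
    assert (Es : E s).
    { split. split. unfold s; apply Rmin_case; lra. apply Rmin_r.
      intros u Hu. destruct (Rle_or_lt u m). apply Em; lra.
      assert (Rabs (u - m) < del). { rewrite Rabs_right by lra. assert (u <= m + del/2) by (eapply Rle_trans; [apply Hu| apply Rmin_l]). lra. }
      specialize (Hf u H0). rewrite Rabs_lt_between in Hf. lra. }
    assert (s <= m) by (apply Hub; auto). unfold s in H. revert H. apply Rmin_case; lra. }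
  subst m. destruct Em as [_ Em]. auto.
Qed.


Lemma p4_pos x : 0 <= x -> p4 x = x^4.
Proof. intros H. unfold p4. rewrite Rabs_right by lra. ring. Qed.

Lemma Hval_bound A x : 0 <= A -> Rabs x <= 1 -> Rabs (Hval A x) <= (6*A^2 + 4*A + 1) * x^2.
Proof.
  intros HA Hx. replace (Hval A x) with (x^2 * (6*A^2 + 4*A*x + x^2)) by (unfold Hval; ring).
  rewrite Rabs_mult, (Rabs_right (x^2)) by (apply Rle_ge, pow2_ge_0).
  rewrite Rmult_comm. apply Rmult_le_compat_r. apply pow2_ge_0.
  apply Rabs_le_between in Hx. apply Rabs_le. assert (x^2 <= 1) by (simpl; nra).
  assert (0 <= x^2) by apply pow2_ge_0. assert (-A <= A*x <= A) by nra. split; nra.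
Qed.

Lemma quad_neg al be ga x y : 0 < al -> 0 < ga -> be^2 < al*ga ->
  - al*x^2 + 2*be*x*y - ga*y^2 <= - ((al*ga - be^2)/(al+ga)) * (x^2 + y^2).
Proof.
  intros Ha Hg Hb. set (c := (al*ga - be^2)/(al+ga)).
  assert (Hc1 : (al - c)*(al+ga) = al^2 + be^2) by (unfold c; field; lra).
  assert (Hc2 : (ga - c)*(al+ga) = ga^2 + be^2) by (unfold c; field; lra).
  assert (Hc3 : c*(al+ga) = al*ga - be^2) by (unfold c; field; lra).
  assert (A1 : 0 < al - c). { destruct (Rlt_or_le 0 (al - c)); auto. assert (0 < al^2 + be^2) by nra. nra. }
  assert (A2 : 0 < ga - c). { destruct (Rlt_or_le 0 (ga - c)); auto. assert (0 < ga^2 + be^2) by nra. nra. }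
  assert (A3 : (al - c)*(ga - c) - be^2 = c^2).
  { apply Rmult_eq_reg_r with (al+ga); [|lra]. 
    replace (((al - c)*(ga - c) - be^2)*(al+ga)) with ((al*ga - be^2 - c*(al+ga))*(al+ga) + c^2*(al+ga)) by ring.
    rewrite Hc3. ring. }
  assert (K : 0 <= (al - c)*((al - c)*x^2 - 2*be*x*y + (ga - c)*y^2)).
  { replace ((al - c)*((al - c)*x^2 - 2*be*x*y + (ga - c)*y^2)) with (((al - c)*x - be*y)^2 + ((al - c)*(ga - c) - be^2)*y^2) by ring.
    rewrite A3. assert (0 <= ((al - c)*x - be*y)^2) by apply pow2_ge_0. assert (0 <= c^2*y^2) by (apply Rmult_le_pos; apply pow2_ge_0). lra. }
  assert (0 <= (al - c)*x^2 - 2*be*x*y + (ga - c)*y^2).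
  { destruct (Rle_or_lt 0 ((al - c)*x^2 - 2*be*x*y + (ga - c)*y^2)); auto. nra. }
  lra.
Qed.

Definition HBn A := 6*A^2 + 4*A + 1.
Definition c0f lam sig e A S0 :=
  let al := a21 lam sig e A * a11 lam sig e A in
  let be := a12 lam sig e S0 * a21 lam sig e A in
  let ga := a12 lam sig e S0 * a22 lam sig S0 in (al*ga - be^2)/(al+ga).
Definition Kf lam sig e A S0 :=
  a21 lam sig e A * (e*sig*HBn S0 + 2*e*sig*HBn A) + a12 lam sig e S0 * (sig*HBn S0 + e*sig*HBn A).

Lemma a_pos lam sig e A S0 : 0 <= lam -> 0 < sig -> 0 < e -> 0 < A -> 0 < S0 ->
  0 < a11 lam sig e A /\ 0 < a12 lam sig e S0 /\ 0 < a21 lam sig e A /\ 0 < a22 lam sig S0.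
Proof.
  intros. unfold a11, a12, a21, a22.
  assert (0 < A^3) by (apply pow_lt; lra). assert (0 < S0^3) by (apply pow_lt; lra).
  assert (0 < e*sig) by nra. repeat split; nra.
Qed.

Lemma c0_pos lam sig e A S0 : 0 <= lam -> 0 < sig -> 0 < e < 2 -> 0 < A < S0 -> S0^4 <= 2*A^4 ->
  0 < c0f lam sig e A S0.
Proof.
  intros Hl Hs He HA H4. destruct (a_pos lam sig e A S0) as [P1 [P2 [P3 P4]]]; try lra.
  assert (HD := DET_pos lam sig e A S0 Hl Hs He HA H4). unfold Dt in HD.
  unfold c0f. cbv zeta. apply Rdiv_lt_0_compat.
  replace (a21 lam sig e A * a11 lam sig e A * (a12 lam sig e S0 * a22 lam sig S0) -
    (a12 lam sig e S0 * a21 lam sig e A) ^ 2) with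
    (a12 lam sig e S0 * a21 lam sig e A * (a11 lam sig e A * a22 lam sig S0 - a12 lam sig e S0 * a21 lam sig e A)) by ring.
  apply Rmult_lt_0_compat; nra.
  nra.
Qed.

Lemma Kf_pos lam sig e A S0 : 0 <= lam -> 0 < sig -> 0 < e -> 0 < A -> 0 < S0 -> 0 <= Kf lam sig e A S0.
Proof.
  intros. destruct (a_pos lam sig e A S0) as [P1 [P2 [P3 P4]]]; auto.
  assert (0 < HBn A) by (unfold HBn; assert (0 <= A^2) by apply pow2_ge_0; lra).
  assert (0 < HBn S0) by (unfold HBn; assert (0 <= S0^2) by apply pow2_ge_0; lra).
  unfold Kf. assert (0 < e*sig) by nra.
  assert (0 <= e*sig*HBn S0 + 2*e*sig*HBn A) by nra.
  assert (0 <= sig*HBn S0 + e*sig*HBn A) by nra. nra.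
Qed.

Lemma KEY lam sig qb e A S0 x y rho : 0 <= lam -> 0 < sig -> 0 < e < 2 -> 0 < A < S0 -> S0^4 <= 2*A^4 ->
  FaP lam sig e A S0 = 0 -> FsP lam sig qb e A S0 = 0 ->
  Rabs x <= rho -> Rabs y <= rho -> rho <= 1 -> rho * Kf lam sig e A S0 <= c0f lam sig e A S0 / 2 ->
  a21 lam sig e A * x * FaP lam sig e (A+x) (S0+y) + a12 lam sig e S0 * y * FsP lam sig qb e (A+x) (S0+y)
  <= - (c0f lam sig e A S0 / 2) * (x^2 + y^2).
Proof.
  intros Hl Hs He HA H4 Fa Fs Hx Hy Hr1 HK.
  destruct (a_pos lam sig e A S0) as [P1 [P2 [P3 P4]]]; try lra.
  assert (HD := DET_pos lam sig e A S0 Hl Hs He HA H4). unfold Dt in HD.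
  set (b11 := a11 lam sig e A) in *. set (b12 := a12 lam sig e S0) in *.
  set (b21 := a21 lam sig e A) in *. set (b22 := a22 lam sig S0) in *.
  set (Ra := e*sig*Hval S0 y - 2*e*sig*Hval A x).
  set (Rs := -sig*Hval S0 y + e*sig*Hval A x).
  assert (E1 : FaP lam sig e (A+x) (S0+y) = - b11*x + b12*y + Ra).
  { replace (FaP lam sig e (A+x) (S0+y)) with (FaP lam sig e A S0 + (- b11*x + b12*y + Ra)).
    rewrite Fa; ring. unfold FaP, Ra, Hval, b11, b12, a11, a12. ring. }
  assert (E2 : FsP lam sig qb e (A+x) (S0+y) = b21*x - b22*y + Rs).
  { replace (FsP lam sig qb e (A+x) (S0+y)) with (FsP lam sig qb e A S0 + (b21*x - b22*y + Rs)).
    rewrite Fs; ring. unfold FsP, Rs, Hval, b21, b22, a21, a22. ring. }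
  rewrite E1, E2.
  assert (Q := quad_neg (b21*b11) (b12*b21) (b12*b22) x y).
  assert (Qh : (b12*b21)^2 < b21*b11*(b12*b22)).
  { assert (0 < b12*b21*(b11*b22 - b12*b21)) by (apply Rmult_lt_0_compat; nra). nra. }
  specialize (Q (ltac:(nra)) (ltac:(nra)) Qh).
  assert (Ec : c0f lam sig e A S0 = (b21*b11*(b12*b22) - (b12*b21)^2)/(b21*b11 + b12*b22)) by reflexivity.
  rewrite <- Ec in Q.
  set (c := c0f lam sig e A S0) in *.
  assert (Hx1 : Rabs x <= 1) by lra. assert (Hy1 : Rabs y <= 1) by lra.
  assert (HA' := Hval_bound A x (ltac:(lra)) Hx1). assert (HS' := Hval_bound S0 y (ltac:(lra)) Hy1).
  fold (HBn A) in HA'. fold (HBn S0) in HS'.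
  assert (0 < HBn A) by (unfold HBn; assert (0 <= A^2) by apply pow2_ge_0; lra).
  assert (0 < HBn S0) by (unfold HBn; assert (0 <= S0^2) by apply pow2_ge_0; lra).
  set (n2 := x^2 + y^2).
  assert (X2 : x^2 <= n2) by (unfold n2; assert (0 <= y^2) by apply pow2_ge_0; lra).
  assert (Y2 : y^2 <= n2) by (unfold n2; assert (0 <= x^2) by apply pow2_ge_0; lra).
  assert (Hes : 0 < e*sig) by nra.
  assert (BRa : Rabs Ra <= (e*sig*HBn S0 + 2*e*sig*HBn A) * n2).
  { unfold Ra, Rminus. eapply Rle_trans. apply Rabs_triang. rewrite Rabs_Ropp, (Rabs_mult (e*sig)), (Rabs_mult (2*e*sig)).
    rewrite (Rabs_right (e*sig)) by lra. rewrite (Rabs_right (2*e*sig)) by lra.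
    assert (e*sig*Rabs (Hval S0 y) <= e*sig*(HBn S0 * n2)).
    { apply Rmult_le_compat_l; [lra|]. eapply Rle_trans; [apply HS'|]. apply Rmult_le_compat_l; lra. }
    assert (2*e*sig*Rabs (Hval A x) <= 2*e*sig*(HBn A * n2)).
    { apply Rmult_le_compat_l; [lra|]. eapply Rle_trans; [apply HA'|]. apply Rmult_le_compat_l; lra. }
    lra. }
  assert (BRs : Rabs Rs <= (sig*HBn S0 + e*sig*HBn A) * n2).
  { unfold Rs. eapply Rle_trans. apply Rabs_triang. rewrite (Rabs_mult (-sig)), (Rabs_mult (e*sig)), Rabs_Ropp.
    rewrite (Rabs_right sig) by lra. rewrite (Rabs_right (e*sig)) by lra.
    assert (sig*Rabs (Hval S0 y) <= sig*(HBn S0 * n2)).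
    { apply Rmult_le_compat_l; [lra|]. eapply Rle_trans; [apply HS'|]. apply Rmult_le_compat_l; lra. }
    assert (e*sig*Rabs (Hval A x) <= e*sig*(HBn A * n2)).
    { apply Rmult_le_compat_l; [lra|]. eapply Rle_trans; [apply HA'|]. apply Rmult_le_compat_l; lra. }
    lra. }
  assert (Hn2 : 0 <= n2) by (unfold n2; assert (0 <= x^2) by apply pow2_ge_0; assert (0 <= y^2) by apply pow2_ge_0; lra).
  assert (Rem : b21*x*Ra + b12*y*Rs <= rho * Kf lam sig e A S0 * n2).
  { assert (T1 : b21*x*Ra <= b21*(rho*((e*sig*HBn S0 + 2*e*sig*HBn A) * n2))).
    { eapply Rle_trans. apply Rle_abs. rewrite !Rabs_mult. rewrite (Rabs_right b21) by lra.
      rewrite Rmult_assoc. apply Rmult_le_compat_l; [lra|]. apply Rmult_le_compat; auto; apply Rabs_pos. }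
    assert (T2 : b12*y*Rs <= b12*(rho*((sig*HBn S0 + e*sig*HBn A) * n2))).
    { eapply Rle_trans. apply Rle_abs. rewrite !Rabs_mult. rewrite (Rabs_right b12) by lra.
      rewrite Rmult_assoc. apply Rmult_le_compat_l; [lra|]. apply Rmult_le_compat; auto; apply Rabs_pos. }
    unfold Kf. fold b21 b12. lra. }
  assert (HK2 : rho * Kf lam sig e A S0 * n2 <= c/2 * n2) by (apply Rmult_le_compat_r; auto).
  replace (b21 * x * (- b11 * x + b12 * y + Ra) + b12 * y * (b21 * x - b22 * y + Rs)) with
    ((- (b21*b11)*x^2 + 2*(b12*b21)*x*y - (b12*b22)*y^2) + (b21*x*Ra + b12*y*Rs)) by ring.
  fold n2 in Q. lra.
Qed.

Lemma sqrt_lt_sq a b : 0 <= a -> 0 <= b -> sqrt a < sqrt b -> a < b.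
Proof.
  intros Ha Hb H. destruct (Rlt_or_le a b); auto. exfalso.
  assert (sqrt b <= sqrt a) by (apply sqrt_le_1_alt; auto). lra.
Qed.

Lemma abs_lt_sq x r : 0 < r -> x^2 < r^2 -> Rabs x < r.
Proof.
  intros Hr H. destruct (Rlt_or_le (Rabs x) r); auto. exfalso.
  assert (r^2 <= Rabs x ^2) by (apply pow_incr; lra). rewrite pow2_abs in H1. lra.
Qed.

Lemma STAB ga gs lam sig q (beta : R -> R) bw e A S0 g :
  0 < ga -> 0 < gs -> 0 <= lam -> 0 < sig -> 0 < e < 2 -> 0 < A < S0 -> S0^4 <= 2*A^4 -> 0 < g ->
  (forall y, Rabs y < g -> beta (S0 + y) = bw) ->
  FaP lam sig e A S0 = 0 -> FsP lam sig (q*bw) e A S0 = 0 ->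
  exp_stable ga gs lam sig q beta e A S0.
Proof.
  intros Hga Hgs Hl Hs He HA H4 Hg Hb HFa HFs.
  destruct (a_pos lam sig e A S0) as [P1 [P2 [P3 P4]]]; try lra.
  assert (Hc := c0_pos lam sig e A S0 Hl Hs He HA H4). set (c := c0f lam sig e A S0) in *.
  assert (HK := Kf_pos lam sig e A S0 Hl Hs (proj1 He) (proj1 HA) (ltac:(lra))).
  set (K := Kf lam sig e A S0) in *.
  set (rho := Rmin (Rmin 1 (A/2)) (Rmin (g/2) (c / (2*K+1)))).
  assert (Hr0 : 0 < rho).
  { unfold rho. repeat apply Rmin_pos; try lra. apply Rdiv_lt_0_compat; lra. }
  assert (Hr1 : rho <= 1) by (unfold rho; eapply Rle_trans; [apply Rmin_l| apply Rmin_l]).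
  assert (Hr2 : rho <= A/2) by (unfold rho; eapply Rle_trans; [apply Rmin_l| apply Rmin_r]).
  assert (Hr3 : rho <= g/2) by (unfold rho; eapply Rle_trans; [apply Rmin_r| apply Rmin_l]).
  assert (Hr4 : rho <= c/(2*K+1)) by (unfold rho; eapply Rle_trans; [apply Rmin_r| apply Rmin_r]).
  assert (HrK : rho * K <= c/2).
  { apply Rmult_le_compat_r with (r := 2*K+1) in Hr4; [|lra].
    replace (c / (2*K+1) * (2*K+1)) with c in Hr4 by (field; lra). nra. }
  set (p := a21 lam sig e A / gs). set (qq := a12 lam sig e S0 / ga).
  assert (Hp : 0 < p) by (apply Rdiv_lt_0_compat; lra).
  assert (Hqq : 0 < qq) by (apply Rdiv_lt_0_compat; lra).
  set (mlo := Rmin p qq). set (mhi := p + qq).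
  assert (Hmlo : 0 < mlo) by (apply Rmin_pos; lra).
  assert (Hmlp : mlo <= p) by apply Rmin_l. assert (Hmlq : mlo <= qq) by apply Rmin_r.
  set (L := mlo * rho^2).
  assert (HL : 0 < L) by (unfold L; apply Rmult_lt_0_compat; auto; apply pow_lt; lra).
  set (mu := c / (2 * ga * gs * mhi)).
  assert (Hmu : 0 < mu) by (unfold mu; apply Rdiv_lt_0_compat; [lra| unfold mhi; repeat apply Rmult_lt_0_compat; lra]).
  exists (sqrt (L / mhi)), (sqrt (mhi / mlo)), mu.
  split. apply sqrt_lt_R0. apply Rdiv_lt_0_compat; unfold mhi; lra.
  split. apply sqrt_lt_R0. apply Rdiv_lt_0_compat; unfold mhi; lra.
  split; auto.
  intros T xa xs HT [Hcont Hder] Hd0 t Ht.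
  set (V := fun u => p * ((xa u - A) * (xa u - A)) + qq * ((xs u - S0) * (xs u - S0))).
  set (n2 := fun u => (xa u - A)^2 + (xs u - S0)^2).
  assert (Vlo : forall u, mlo * n2 u <= V u).
  { intros u. unfold V, n2. set (X := xa u - A). set (Y := xs u - S0).
    assert (0 <= X*X) by apply Rle_0_sqr. assert (0 <= Y*Y) by apply Rle_0_sqr.
    assert (0 <= (p - mlo)*(X*X)) by (apply Rmult_le_pos; lra).
    assert (0 <= (qq - mlo)*(Y*Y)) by (apply Rmult_le_pos; lra).
    replace (X^2) with (X*X) by ring. replace (Y^2) with (Y*Y) by ring. lra. }
  assert (Vhi : forall u, V u <= mhi * n2 u).
  { intros u. unfold V, n2, mhi. set (X := xa u - A). set (Y := xs u - S0).
    assert (0 <= X*X) by apply Rle_0_sqr. assert (0 <= Y*Y) by apply Rle_0_sqr.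
    assert (0 <= qq*(X*X)) by (apply Rmult_le_pos; lra).
    assert (0 <= p*(Y*Y)) by (apply Rmult_le_pos; lra).
    replace (X^2) with (X*X) by ring. replace (Y^2) with (Y*Y) by ring. lra. }
  assert (Vpos : forall u, 0 <= V u).
  { intros u. unfold V. assert (0 <= (xa u - A)*(xa u - A)) by apply Rle_0_sqr. assert (0 <= (xs u - S0)*(xs u - S0)) by apply Rle_0_sqr.
    assert (0 <= p * ((xa u - A)*(xa u - A))) by (apply Rmult_le_pos; lra).
    assert (0 <= qq * ((xs u - S0)*(xs u - S0))) by (apply Rmult_le_pos; lra). lra. }
  assert (n2pos : forall u, 0 <= n2 u).
  { intros u; unfold n2. assert (0 <= (xa u - A)^2) by apply pow2_ge_0. assert (0 <= (xs u - S0)^2) by apply pow2_ge_0. lra. }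
  assert (Vc : forall u, 0 <= u < T -> continuous V u).
  { intros u Hu. destruct (Hcont u Hu) as [C1 C2]. unfold V.
    apply (cR_plus (fun u => p * ((xa u - A) * (xa u - A))) (fun u => qq * ((xs u - S0) * (xs u - S0)))).
    apply (cR_mult (fun _ => p) (fun u => (xa u - A) * (xa u - A))). apply cR_const.
    apply (cR_mult (fun u => xa u - A) (fun u => xa u - A)); apply cR_sub; auto.
    apply (cR_mult (fun _ => qq) (fun u => (xs u - S0) * (xs u - S0))). apply cR_const.
    apply (cR_mult (fun u => xs u - S0) (fun u => xs u - S0)); apply cR_sub; auto. }
  assert (Small : forall u, V u < L -> Rabs (xa u - A) < rho /\ Rabs (xs u - S0) < rho).
  { intros u HV. assert (mlo * n2 u < mlo * rho^2) by (specialize (Vlo u); unfold L in HV; lra).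
    assert (n2 u < rho^2) by (apply Rmult_lt_reg_l with mlo; auto).
    unfold n2 in H0. assert (0 <= (xa u - A)^2) by apply pow2_ge_0. assert (0 <= (xs u - S0)^2) by apply pow2_ge_0.
    split; apply abs_lt_sq; auto; lra. }
  set (da := fun u => / ga * Fa lam sig e (xa u) (xs u)).
  set (ds := fun u => / gs * Fs lam sig q beta e (xa u) (xs u)).
  set (dV := fun u => p * (da u * (xa u - A) + (xa u - A) * da u) + qq * (ds u * (xs u - S0) + (xs u - S0) * ds u)).
  assert (Vd : forall u, 0 < u < T -> is_derive V u (dV u)).
  { intros u Hu. destruct (Hder u Hu) as [D1 D2]. unfold V, dV.
    apply (dR_plus (fun u => p * ((xa u - A) * (xa u - A))) (fun u => qq * ((xs u - S0) * (xs u - S0)))).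
    apply (is_derive_scal (fun u => (xa u - A) * (xa u - A))).
    apply (dR_mult (fun u => xa u - A) (fun u => xa u - A)); apply dR_sub; auto.
    apply (is_derive_scal (fun u => (xs u - S0) * (xs u - S0))).
    apply (dR_mult (fun u => xs u - S0) (fun u => xs u - S0)); apply dR_sub; auto. }
  assert (Sign : forall u, V u < L -> dV u + 2 * mu * V u <= 0).
  { intros u HV. destruct (Small u HV) as [Sx Sy].
    set (x := xa u - A) in *. set (y := xs u - S0) in *.
    assert (Exa : xa u = A + x) by (unfold x; ring). assert (Exs : xs u = S0 + y) by (unfold y; ring).
    assert (Ha0 : 0 <= A + x) by (apply Rabs_lt_between in Sx; lra).
    assert (Hs0 : 0 <= S0 + y) by (apply Rabs_lt_between in Sy; lra).
    assert (EFa : Fa lam sig e (xa u) (xs u) = FaP lam sig e (A+x) (S0+y)).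
    { rewrite Exa, Exs. unfold Fa, FaP. rewrite !p4_pos by auto. ring. }
    assert (EFs : Fs lam sig q beta e (xa u) (xs u) = FsP lam sig (q*bw) e (A+x) (S0+y)).
    { rewrite Exa, Exs. unfold Fs, FsP. rewrite !p4_pos by auto. rewrite Hb by lra. ring. }
    assert (Kx := KEY lam sig (q*bw) e A S0 x y rho Hl Hs He HA H4 HFa HFs (ltac:(lra)) (ltac:(lra)) Hr1 HrK).
    fold c in Kx.
    assert (EdV : dV u = 2 / (ga * gs) * (a21 lam sig e A * x * FaP lam sig e (A+x) (S0+y) +
                 a12 lam sig e S0 * y * FsP lam sig (q*bw) e (A+x) (S0+y))).
    { unfold dV, da, ds. fold x y. rewrite EFa, EFs. unfold p, qq. field. lra. }
    assert (Vh := Vhi u). unfold n2 in Vh. fold x y in Vh.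
    assert (Hgg : 0 < 2 / (ga * gs)) by (apply Rdiv_lt_0_compat; nra).
    assert (T1 : dV u <= 2 / (ga * gs) * (- (c / 2) * (x^2 + y^2))) by (rewrite EdV; apply Rmult_le_compat_l; lra).
    assert (T2 : 2 * mu * V u <= 2 * mu * (mhi * (x^2 + y^2))) by (apply Rmult_le_compat_l; lra).
    assert (E3 : 2 * mu * (mhi * (x^2 + y^2)) = - (2 / (ga * gs) * (- (c / 2) * (x^2 + y^2)))).
    { unfold mu. field. unfold mhi. split; lra. }
    lra. }
  assert (Dec : forall s, 0 <= s < T -> (forall u, 0 <= u <= s -> V u < L) -> V s * exp (2 * mu * s) <= V 0).
  { intros s0 Hs0 HV. apply (decay_abstract V dV mu s0); try lra.
    intros u Hu; apply Vd; lra. intros u Hu; apply Vc; lra. intros u Hu. apply Sign. apply HV; lra. }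
  assert (HV0 : V 0 < L).
  { unfold dist2 in Hd0. fold (n2 0) in Hd0.
    assert (n2 0 < L / mhi). { apply sqrt_lt_sq; auto. apply Rlt_le, Rdiv_lt_0_compat; unfold mhi; lra. }
    assert (mhi * n2 0 < L). { apply Rmult_lt_compat_l with (r := mhi) in H; [|unfold mhi; lra].
      replace (mhi * (L / mhi)) with L in H by (field; unfold mhi; lra). auto. }
    specialize (Vhi 0). lra. }
  assert (Tr := trap V T t L mu (Rlt_le _ _ Hmu) Vc Vpos HV0 Dec Ht).
  assert (Dt' := Dec t Ht Tr).
  assert (E2 : exp (- mu * t) ^ 2 = / exp (2 * mu * t)).
  { rewrite <- exp_Ropp. simpl. rewrite Rmult_1_r, <- exp_plus. f_equal. ring. }
  assert (Hex : 0 < exp (2 * mu * t)) by apply exp_pos.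
  assert (Vt : V t <= V 0 * exp (- mu * t) ^ 2).
  { rewrite E2. apply Rmult_le_reg_r with (exp (2 * mu * t)); auto.
    replace (V 0 * / exp (2 * mu * t) * exp (2 * mu * t)) with (V 0) by (field; lra). lra. }
  assert (Nt : n2 t <= mhi / mlo * exp (- mu * t) ^ 2 * n2 0).
  { apply Rmult_le_reg_l with mlo; auto.
    replace (mlo * (mhi / mlo * exp (- mu * t) ^ 2 * n2 0)) with (exp (- mu * t) ^ 2 * (mhi * n2 0)) by (field; lra).
    specialize (Vlo t). specialize (Vhi 0).
    assert (0 <= exp (- mu * t) ^ 2) by apply pow2_ge_0.
    assert (V 0 * exp (- mu * t) ^ 2 <= exp (- mu * t) ^ 2 * (mhi * n2 0)) by nra. lra. }
  unfold dist2. fold (n2 t). fold (n2 0).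
  replace (sqrt (mhi / mlo) * exp (- mu * t) * sqrt (n2 0)) with (sqrt (mhi / mlo * exp (- mu * t) ^ 2 * n2 0)).
  apply sqrt_le_1_alt; auto.
  assert (0 <= mhi / mlo) by (apply Rlt_le, Rdiv_lt_0_compat; unfold mhi; lra).
  rewrite sqrt_mult_alt, sqrt_mult_alt, sqrt_pow2; auto.
  apply Rlt_le, exp_pos. apply Rmult_le_pos; auto; apply pow2_ge_0.
Qed.


Definition bwf (w : bool) (bm bp : R) : R := if w then bp else bm.
Definition gapf (w : bool) (Tsm Tsp S0 : R) : R := if w then S0 - Tsp else Tsm - S0.

Lemma coal_reg Tsm Tsp bm bp w s : Tsm < Tsp -> regime w Tsm Tsp s ->
  coalbedo Tsm Tsp bm bp s = bwf w bm bp.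
Proof.
  intros H R. unfold coalbedo, bwf, regime in *. destruct w.
  destruct (Rle_dec s Tsm); [lra|]. destruct (Rle_dec Tsp s); [auto|lra].
  destruct (Rle_dec s Tsm); [auto|lra].
Qed.

Lemma gap_reg w Tsm Tsp S0 y : regime w Tsm Tsp S0 -> Rabs y < gapf w Tsm Tsp S0 -> regime w Tsm Tsp (S0 + y).
Proof.
  intros R H. apply Rabs_lt_between in H. unfold regime, gapf in *. destruct w; lra.
Qed.

Lemma gap_pos w Tsm Tsp S0 : regime w Tsm Tsp S0 -> 0 < gapf w Tsm Tsp S0.
Proof. unfold regime, gapf; destruct w; lra. Qed.

Lemma EQ_iff lam sig q Tsm Tsp bm bp w e a s : Tsm < Tsp -> 0 <= a -> 0 <= s -> regime w Tsm Tsp s ->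
  (is_equilibrium lam sig q (coalbedo Tsm Tsp bm bp) e a s <->
   FaP lam sig e a s = 0 /\ FsP lam sig (q * bwf w bm bp) e a s = 0).
Proof.
  intros HT Ha Hs R. unfold is_equilibrium, Fa, Fs, FaP, FsP.
  rewrite !p4_pos by auto. rewrite (coal_reg Tsm Tsp bm bp w s HT R).
  split. intros [_ [_ [H1 H2]]]. split; lra. intros [H1 H2]. repeat split; auto; lra.
Qed.

Lemma POSM lam sig q Tsm Tsp bm bp w e a s : 0 <= lam -> 0 < sig -> 0 < q -> 0 < Tsm -> Tsm < Tsp ->
  0 < bm < bp -> 0 < e ->
  is_equilibrium lam sig q (coalbedo Tsm Tsp bm bp) e a s -> regime w Tsm Tsp s ->
  0 < a < s /\ s^4 <= 2*a^4 /\ FaP lam sig e a s = 0 /\ FsP lam sig (q * bwf w bm bp) e a s = 0.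
Proof.
  intros Hl Hs Hq HT1 HT Hb He Heq R.
  assert (Ha : 0 <= a) by apply Heq. assert (Hs0 : 0 <= s) by apply Heq.
  apply (EQ_iff lam sig q Tsm Tsp bm bp w e a s HT Ha Hs0 R) in Heq. destruct Heq as [F1 F2].
  assert (0 < q * bwf w bm bp) by (unfold bwf; destruct w; apply Rmult_lt_0_compat; lra).
  destruct (POSP lam sig (q * bwf w bm bp) e a s Hl Hs He H Ha Hs0 F1 F2). auto.
Qed.

Lemma UNIQM lam sig q Tsm Tsp bm bp w e a s a' s' : 0 <= lam -> 0 < sig -> 0 < q -> 0 < Tsm -> Tsm < Tsp ->
  0 < bm < bp -> 0 < e < 2 ->
  is_equilibrium lam sig q (coalbedo Tsm Tsp bm bp) e a s -> regime w Tsm Tsp s ->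
  is_equilibrium lam sig q (coalbedo Tsm Tsp bm bp) e a' s' -> regime w Tsm Tsp s' ->
  a = a' /\ s = s'.
Proof.
  intros Hl Hs Hq HT1 HT Hb He E1 R1 E2 R2.
  destruct (POSM lam sig q Tsm Tsp bm bp w e a s Hl Hs Hq HT1 HT Hb (proj1 He) E1 R1) as [P1 [P2 [P3 P4]]].
  destruct (POSM lam sig q Tsm Tsp bm bp w e a' s' Hl Hs Hq HT1 HT Hb (proj1 He) E2 R2) as [Q1 [Q2 [Q3 Q4]]].
  apply (UNIQP lam sig (q * bwf w bm bp) e a s a' s'); auto.
Qed.

Lemma LOCM lam sig q Tsm Tsp bm bp w e1 A1 S1 : 0 <= lam -> 0 < sig -> 0 < q -> 0 < Tsm -> Tsm < Tsp ->
  0 < bm < bp -> 0 < e1 < 2 ->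
  is_equilibrium lam sig q (coalbedo Tsm Tsp bm bp) e1 A1 S1 -> regime w Tsm Tsp S1 ->
  exists r, 0 < r /\
   (forall N, nrm r N (Ya lam sig e1 A1 S1) <= 1 /\ nrm r N (Ys lam sig e1 A1 S1) <= 1) /\
   forall h, Rabs h < r -> exists x y,
     is_pseries (Ya lam sig e1 A1 S1) h x /\ is_pseries (Ys lam sig e1 A1 S1) h y /\
     is_equilibrium lam sig q (coalbedo Tsm Tsp bm bp) (e1 + h) (A1 + x) (S1 + y) /\
     regime w Tsm Tsp (S1 + y).
Proof.
  intros Hl Hs Hq HT1 HT Hb He E1 R1.
  destruct (POSM lam sig q Tsm Tsp bm bp w e1 A1 S1 Hl Hs Hq HT1 HT Hb (proj1 He) E1 R1) as [P1 [P2 [P3 P4]]].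
  assert (HD := DET_pos lam sig e1 A1 S1 Hl Hs He P1 P2).
  assert (Hg := gap_pos w Tsm Tsp S1 R1).
  set (g := gapf w Tsm Tsp S1) in *.
  set (d0' := Rmin 1 (Rmin (A1/2) (g/2))).
  assert (Hd0 : 0 < d0') by (unfold d0'; repeat apply Rmin_pos; lra).
  assert (Hd1 : d0' <= 1) by apply Rmin_l.
  assert (Hd2 : d0' <= A1/2) by (unfold d0'; eapply Rle_trans; [apply Rmin_r| apply Rmin_l]).
  assert (Hd3 : d0' <= g/2) by (unfold d0'; eapply Rle_trans; [apply Rmin_r| apply Rmin_r]).
  destruct (LOC lam sig e1 A1 S1 d0' Hd0) as [r [Hr [NB Hev]]].
  exists r. split; auto. split. intros N; destruct (NB N); split; lra.
  intros h Hh. destruct (Hev h Hh) as [x [y [Ex [Ey [Bx [By [Fx Fy]]]]]]].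
  exists x, y. split; auto. split; auto.
  destruct (alg_step lam sig (q * bwf w bm bp) e1 A1 S1 h x y (Rgt_not_eq _ _ HD) P3 P4 Fx Fy) as [G1 G2].
  assert (Rg : regime w Tsm Tsp (S1 + y)) by (apply (gap_reg w Tsm Tsp S1 y R1); fold g; lra).
  split; auto.
  apply Rabs_le_between in Bx. apply Rabs_le_between in By.
  apply (EQ_iff lam sig q Tsm Tsp bm bp w (e1+h) (A1+x) (S1+y) HT); auto; lra.
Qed.

Definition fpair (lam sig q Tsm Tsp bm bp : R) (w : bool) (e : R) : R * R :=
  epsilon (inhabits (0, 0)) (fun p => is_equilibrium lam sig q (coalbedo Tsm Tsp bm bp) e (fst p) (snd p) /\
                                       regime w Tsm Tsp (snd p)).

Lemma fp_eq lam sig q Tsm Tsp bm bp w e a s : 0 <= lam -> 0 < sig -> 0 < q -> 0 < Tsm -> Tsm < Tsp ->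
  0 < bm < bp -> 0 < e < 2 ->
  is_equilibrium lam sig q (coalbedo Tsm Tsp bm bp) e a s -> regime w Tsm Tsp s ->
  fst (fpair lam sig q Tsm Tsp bm bp w e) = a /\ snd (fpair lam sig q Tsm Tsp bm bp w e) = s.
Proof.
  intros Hl Hs Hq HT1 HT Hb He E HR.
  assert (Ex : exists p : R * R, is_equilibrium lam sig q (coalbedo Tsm Tsp bm bp) e (fst p) (snd p) /\
                                       regime w Tsm Tsp (snd p)) by (exists (a, s); auto).
  destruct (epsilon_spec (inhabits (0,0)) _ Ex) as [E' R'].
  fold (fpair lam sig q Tsm Tsp bm bp w e) in E', R'.
  destruct (UNIQM lam sig q Tsm Tsp bm bp w e _ _ a s Hl Hs Hq HT1 HT Hb He E' R' E HR). auto.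
Qed.

Lemma REP lam sig q Tsm Tsp bm bp w e1 A1 S1 m : 0 <= lam -> 0 < sig -> 0 < q -> 0 < Tsm -> Tsm < Tsp ->
  0 < bm < bp -> 0 < e1 < 2 ->
  is_equilibrium lam sig q (coalbedo Tsm Tsp bm bp) e1 A1 S1 -> regime w Tsm Tsp S1 ->
  0 < m -> (forall z, Rabs (z - e1) < m -> 0 < z < 2) ->
  exists rho, 0 < rho /\ Rbar_le rho (CV_radius (Ya lam sig e1 A1 S1)) /\ Rbar_le rho (CV_radius (Ys lam sig e1 A1 S1)) /\
    forall z, Rabs (z - e1) < rho ->
      is_pseries (Ya lam sig e1 A1 S1) (z - e1) (fst (fpair lam sig q Tsm Tsp bm bp w z) - A1) /\
      is_pseries (Ys lam sig e1 A1 S1) (z - e1) (snd (fpair lam sig q Tsm Tsp bm bp w z) - S1) /\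
      is_equilibrium lam sig q (coalbedo Tsm Tsp bm bp) z (fst (fpair lam sig q Tsm Tsp bm bp w z)) (snd (fpair lam sig q Tsm Tsp bm bp w z)) /\
      regime w Tsm Tsp (snd (fpair lam sig q Tsm Tsp bm bp w z)).
Proof.
  intros Hl Hs Hq HT1 HT Hb He E1 R1 Hm Hz.
  destruct (LOCM lam sig q Tsm Tsp bm bp w e1 A1 S1 Hl Hs Hq HT1 HT Hb He E1 R1) as [r [Hr [NB Hev]]].
  exists (Rmin r m). split. apply Rmin_pos; auto.
  assert (Hrm : Rmin r m <= r) by apply Rmin_l.
  split. eapply Rbar_le_trans; [| apply (CV_ge r _ 1 Hr (fun N => proj1 (NB N)))]. simpl; auto.
  split. eapply Rbar_le_trans; [| apply (CV_ge r _ 1 Hr (fun N => proj2 (NB N)))]. simpl; auto.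
  intros z Hzr. assert (Hz' : Rabs (z - e1) < m) by (eapply Rlt_le_trans; [apply Hzr| apply Rmin_r]).
  destruct (Hev (z - e1) (ltac:(lra))) as [x [y [Ex [Ey [Eq Rg]]]]].
  replace (e1 + (z - e1)) with z in Eq by ring.
  destruct (fp_eq lam sig q Tsm Tsp bm bp w z (A1 + x) (S1 + y) Hl Hs Hq HT1 HT Hb (Hz z Hz') Eq Rg) as [F1 F2].
  rewrite F1, F2. assert (EA : A1 + x - A1 = x) by ring. assert (ES : S1 + y - S1 = y) by ring. rewrite EA, ES. auto.
Qed.

Lemma deriv_series (a : nat -> R) (f : R -> R) c0' e1 rho : 0 < rho -> Rbar_le rho (CV_radius a) ->
  (forall z, Rabs (z - e1) < rho -> is_pseries a (z - e1) (f z - c0')) -> f e1 = c0' ->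
  is_derive f e1 (a 1%nat).
Proof.
  intros Hr HCV Hrep Hf.
  assert (Hcv0 : Rbar_lt (Rabs 0) (CV_radius a)).
  { rewrite Rabs_R0. destruct (CV_radius a); simpl in *; auto; lra. }
  assert (D0 := is_derive_PSeries a 0 Hcv0). rewrite PSeries_0 in D0. unfold PS_derive in D0.
  replace (INR 1 * a 1%nat) with (a 1%nat) in D0 by (simpl; ring).
  assert (D1 : is_derive (fun z => PSeries a (z - e1)) e1 (a 1%nat)).
  { replace (a 1%nat) with (scal 1 (a 1%nat)) by (unfold scal; simpl; unfold mult; simpl; ring).
    apply (is_derive_comp (PSeries a) (fun z => z - e1) e1). replace (e1 - e1) with 0 by ring. auto.
    auto_derive; auto. }
  assert (D2 : is_derive (fun z => c0' + PSeries a (z - e1)) e1 (0 + a 1%nat)).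
  { apply (dR_plus (fun _ => c0') (fun z => PSeries a (z - e1))).
    apply (is_derive_const (K := R_AbsRing) (V := R_NormedModule)). auto. }
  rewrite Rplus_0_l in D2.
  apply (is_derive_ext_loc (fun z => c0' + PSeries a (z - e1))); auto.
  exists (mkposreal rho Hr). intros z Hz. unfold ball in Hz; simpl in Hz. unfold AbsRing_ball, abs, minus, plus, opp in Hz; simpl in Hz.
  specialize (Hrep z Hz). apply is_pseries_unique in Hrep. cbv beta. rewrite Hrep. lra.
Qed.

Lemma incr_from_deriv (f : R -> R) (P : R -> Prop) :
  (forall x y z, P x -> P z -> x <= y <= z -> P y) ->
  (forall x, P x -> exists l, is_derive f x l /\ 0 < l) ->
  forall e1 e2, P e1 -> P e2 -> e1 < e2 -> f e1 < f e2.
Proof.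
  intros Hconv Hd e1 e2 P1 P2 H12.
  destruct (MVT_gen f e1 e2 (Derive f)) as [c [Hc E]].
  - intros x Hx. rewrite Rmin_left, Rmax_right in Hx by lra.
    destruct (Hd x (Hconv e1 x e2 P1 P2 (ltac:(lra)))) as [l [Dl _]].
    rewrite (is_derive_unique f x l Dl). auto.
  - intros x Hx. rewrite Rmin_left, Rmax_right in Hx by lra.
    destruct (Hd x (Hconv e1 x e2 P1 P2 (ltac:(lra)))) as [l [Dl _]].
    apply continuity_pt_filterlim. apply (ex_derive_continuous (K := R_AbsRing) (V := R_NormedModule)). exists l; auto.
  - rewrite Rmin_left, Rmax_right in Hc by lra.
    destruct (Hd c (Hconv e1 c e2 P1 P2 Hc)) as [l [Dl Hl]].
    rewrite (is_derive_unique f c l Dl) in E.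
    assert (0 < l * (e2 - e1)) by (apply Rmult_lt_0_compat; lra). lra.
Qed.


Theorem proposition2p4
  (ga gs sig q Tsm Tsp bm bp lam : R)
  (Hga : 0 < ga) (Hgs : 0 < gs) (Hsig : 0 < sig) (Hq : 0 < q)
  (HTsm : 0 < Tsm) (HTs : Tsm < Tsp) (Hbm : 0 < bm) (Hb : bm < bp)
  (Hlam : 0 <= lam)
  (w : bool) (eps0 Ta0 Ts0 : R) (Heps0 : 0 < eps0 < 2) :
  is_equilibrium lam sig q (coalbedo Tsm Tsp bm bp) eps0 Ta0 Ts0 ->
  regime w Tsm Tsp Ts0 ->
  exists (d : R) (fa fs : R -> R), 0 < d /\
    fa eps0 = Ta0 /\ fs eps0 = Ts0 /\
    (forall eps, Rabs (eps - eps0) < d -> 0 < eps < 2 ->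
       is_equilibrium lam sig q (coalbedo Tsm Tsp bm bp) eps (fa eps) (fs eps) /\
       regime w Tsm Tsp (fs eps) /\
       (forall a s, is_equilibrium lam sig q (coalbedo Tsm Tsp bm bp) eps a s ->
          regime w Tsm Tsp s -> a = fa eps /\ s = fs eps) /\
       exp_stable ga gs lam sig q (coalbedo Tsm Tsp bm bp) eps (fa eps) (fs eps) /\
       analytic_at fa eps /\ analytic_at fs eps) /\
    (forall e1 e2, Rabs (e1 - eps0) < d -> Rabs (e2 - eps0) < d ->
       0 < e1 -> e2 < 2 -> e1 < e2 -> fs e1 < fs e2) /\
    (1 < eps0 ->
     forall e1 e2, Rabs (e1 - eps0) < d -> Rabs (e2 - eps0) < d ->
       0 < e1 -> e2 < 2 -> e1 < e2 -> fa e1 < fa e2).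
Proof.
  intros Heq Hreg.
  assert (Hbb : 0 < bm < bp) by lra.
  set (fa := fun e => fst (fpair lam sig q Tsm Tsp bm bp w e)).
  set (fs := fun e => snd (fpair lam sig q Tsm Tsp bm bp w e)).
  destruct (LOCM lam sig q Tsm Tsp bm bp w eps0 Ta0 Ts0 Hlam Hsig Hq HTsm HTs Hbb Heps0 Heq Hreg) as [r0 [Hr0 [_ Hev0]]].
  set (c1 := if Rlt_dec 1 eps0 then eps0 - 1 else 1).
  assert (Hc1 : 0 < c1) by (unfold c1; destruct (Rlt_dec 1 eps0); lra).
  set (d := Rmin (Rmin r0 eps0) (Rmin (2 - eps0) c1) / 2).
  assert (Hm : 0 < Rmin (Rmin r0 eps0) (Rmin (2 - eps0) c1)) by (repeat apply Rmin_pos; lra).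
  assert (Hd : 0 < d) by (unfold d; lra).
  assert (Hd1 : d < r0). { unfold d. assert (Rmin (Rmin r0 eps0) (Rmin (2 - eps0) c1) <= r0) by (eapply Rle_trans; [apply Rmin_l| apply Rmin_l]). lra. }
  assert (Hd2 : d < eps0). { unfold d. assert (Rmin (Rmin r0 eps0) (Rmin (2 - eps0) c1) <= eps0) by (eapply Rle_trans; [apply Rmin_l| apply Rmin_r]). lra. }
  assert (Hd3 : d < 2 - eps0). { unfold d. assert (Rmin (Rmin r0 eps0) (Rmin (2 - eps0) c1) <= 2 - eps0) by (eapply Rle_trans; [apply Rmin_r| apply Rmin_l]). lra. }
  assert (Hd4 : d < c1). { unfold d. assert (Rmin (Rmin r0 eps0) (Rmin (2 - eps0) c1) <= c1) by (eapply Rle_trans; [apply Rmin_r| apply Rmin_r]). lra. }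
  assert (INT : forall z, Rabs (z - eps0) < d -> 0 < z < 2).
  { intros z Hz. apply Rabs_lt_between in Hz. lra. }
  assert (GOOD : forall z, Rabs (z - eps0) < d ->
            is_equilibrium lam sig q (coalbedo Tsm Tsp bm bp) z (fa z) (fs z) /\ regime w Tsm Tsp (fs z)).
  { intros z Hz. destruct (Hev0 (z - eps0) (ltac:(lra))) as [x [y [_ [_ [E R]]]]].
    replace (eps0 + (z - eps0)) with z in E by ring.
    destruct (fp_eq lam sig q Tsm Tsp bm bp w z _ _ Hlam Hsig Hq HTsm HTs Hbb (INT z Hz) E R) as [F1 F2].
    unfold fa, fs. rewrite F1, F2. auto. }
  assert (LREP : forall z, Rabs (z - eps0) < d ->
     exists rho, 0 < rho /\ Rbar_le rho (CV_radius (Ya lam sig z (fa z) (fs z))) /\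
       Rbar_le rho (CV_radius (Ys lam sig z (fa z) (fs z))) /\
       forall z', Rabs (z' - z) < rho ->
         is_pseries (Ya lam sig z (fa z) (fs z)) (z' - z) (fa z' - fa z) /\
         is_pseries (Ys lam sig z (fa z) (fs z)) (z' - z) (fs z' - fs z)).
  { intros z Hz. destruct (GOOD z Hz) as [E R].
    destruct (REP lam sig q Tsm Tsp bm bp w z (fa z) (fs z) (d - Rabs (z - eps0)) Hlam Hsig Hq HTsm HTs Hbb (INT z Hz) E R)
      as [rho [Hrho [C1 [C2 Hrep]]]].
    lra.
    { intros z' Hz'. apply INT. assert (Rabs (z' - eps0) <= Rabs (z' - z) + Rabs (z - eps0)).
      { replace (z' - eps0) with ((z' - z) + (z - eps0)) by ring. apply Rabs_triang. } lra. }
    exists rho. split; auto. split; auto. split; auto. intros z' Hz'. destruct (Hrep z' Hz') as [H1 [H2 _]]. auto. }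
  assert (DER : forall z, Rabs (z - eps0) < d ->
     (exists l, is_derive fs z l /\ 0 < l) /\ (1 < z -> exists l, is_derive fa z l /\ 0 < l)).
  { intros z Hz. destruct (LREP z Hz) as [rho [Hrho [C1 [C2 Hrep]]]].
    destruct (GOOD z Hz) as [E R].
    destruct (POSM lam sig q Tsm Tsp bm bp w z (fa z) (fs z) Hlam Hsig Hq HTsm HTs Hbb (proj1 (INT z Hz)) E R) as [P1 [P2 [P3 P4]]].
    assert (HD := DET_pos lam sig z (fa z) (fs z) Hlam Hsig (INT z Hz) P1 P2).
    destruct (Y1 lam sig z (fa z) (fs z)) as [Y1a Y1s].
    split.
    - exists (Ys lam sig z (fa z) (fs z) 1%nat). split.
      apply (deriv_series _ fs (fs z) z rho Hrho C2). intros z' Hz'; apply (Hrep z' Hz'). reflexivity.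
      rewrite Y1s. apply Rmult_lt_0_compat. apply Rinv_0_lt_compat; auto.
      apply signS; auto. apply (INT z Hz).
    - intros Hz1. exists (Ya lam sig z (fa z) (fs z) 1%nat). split.
      apply (deriv_series _ fa (fa z) z rho Hrho C1). intros z' Hz'; apply (Hrep z' Hz'). reflexivity.
      rewrite Y1a. apply Rmult_lt_0_compat. apply Rinv_0_lt_compat; auto.
      apply signA; auto. }
  exists d, fa, fs. split; auto.
  destruct (fp_eq lam sig q Tsm Tsp bm bp w eps0 Ta0 Ts0 Hlam Hsig Hq HTsm HTs Hbb Heps0 Heq Hreg) as [F1 F2].
  split. exact F1. split. exact F2.
  split.
  - intros eps Heps Heps2. destruct (GOOD eps Heps) as [E R].
    split; auto. split; auto.
    split. { intros a s Ea Ra. destruct (fp_eq lam sig q Tsm Tsp bm bp w eps a s Hlam Hsig Hq HTsm HTs Hbb Heps2 Ea Ra) as [G1 G2].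
             split; [rewrite <- G1 | rewrite <- G2]; reflexivity. }
    split.
    { destruct (POSM lam sig q Tsm Tsp bm bp w eps (fa eps) (fs eps) Hlam Hsig Hq HTsm HTs Hbb (proj1 Heps2) E R) as [P1 [P2 [P3 P4]]].
      apply (STAB ga gs lam sig q (coalbedo Tsm Tsp bm bp) (bwf w bm bp) eps (fa eps) (fs eps) (gapf w Tsm Tsp (fs eps)));
        auto.
      apply gap_pos; auto.
      intros y Hy. apply coal_reg; auto. apply gap_reg; auto. }
    destruct (LREP eps Heps) as [rho [Hrho [C1 [C2 Hrep]]]].
    destruct (Y0 lam sig eps (fa eps) (fs eps)) as [Y0a Y0s].
    split.
    + exists (splus (d0 (fa eps)) (Ya lam sig eps (fa eps) (fs eps))), rho. split; auto.
      intros y Hy. destruct (Hrep y Hy) as [H1 _].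
      assert (T := ev_plus _ _ _ _ _ (ev_d0 (fa eps) (y - eps)) H1).
      replace (fa eps + (fa y - fa eps)) with (fa y) in T by ring. exact T.
    + exists (splus (d0 (fs eps)) (Ys lam sig eps (fa eps) (fs eps))), rho. split; auto.
      intros y Hy. destruct (Hrep y Hy) as [_ H2].
      assert (T := ev_plus _ _ _ _ _ (ev_d0 (fs eps) (y - eps)) H2).
      replace (fs eps + (fs y - fs eps)) with (fs y) in T by ring. exact T.
  - split.
    + intros e1 e2 H1 H2 _ _ H12.
      apply (incr_from_deriv fs (fun x => Rabs (x - eps0) < d)); auto.
      { intros x y z Hx Hz Hy. apply Rabs_lt_between in Hx. apply Rabs_lt_between in Hz. apply Rabs_lt_between. lra. }
      intros x Hx. apply (DER x Hx).
    + intros He1 e1 e2 H1 H2 _ _ H12.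
      apply (incr_from_deriv fa (fun x => Rabs (x - eps0) < d)); auto.
      { intros x y z Hx Hz Hy. apply Rabs_lt_between in Hx. apply Rabs_lt_between in Hz. apply Rabs_lt_between. lra. }
      intros x Hx. apply (DER x Hx).
      unfold c1 in Hd4. destruct (Rlt_dec 1 eps0); [|lra]. apply Rabs_lt_between in Hx. lra.
Qed.
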